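(* Let $s\in(0,1)$ and $F\in\mathcal M_s$. Suppose that for some $\gamma>0$ one has $\int_\gamma F(x)x^k=0$ for all $k\in\mathbb Z_{\ge0}$. Then $F=0$.
   Context: Fix $q\in(0,1)$. Notation: $(a;q)_\infty=\prod_{j\ge0}(1-aq^j)$, $e_q(x)=1/(x;q)_\infty$. For $\gamma>0$, $\int_\gamma f=(1-q)\sum_{k\in\mathbb Z}\sum_{\epsilon=\pm1}q^k\gamma f(\epsilon q^k\gamma)$ whenever absolutely convergent. For $s>0$, $\mathcal M_s$ is the set of functions $F(x)=f(x)e_{q^2}(-x^2)$ (holomorphic on $|\mathrm{Im}\,x|<1$) where $f(x)=\sum_{l\ge0}a_lx^l$ with $|a_l|\le Cs^lq^{l^2/2}$ for all $l$, for some $C>0$. *)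

(* Defs.v *)
From Stdlib Require Import Reals ZArith.
From Coquelicot Require Import Coquelicot.
Open Scope R_scope.

Fixpoint cpow (z : C) (n : nat) : C :=
  match n with O => RtoC 1 | S m => Cmult (cpow z m) z end.

Fixpoint qpoch_n (a : C) (q : R) (n : nat) : C :=
  match n with
  | O => RtoC 1
  | S m => Cmult (qpoch_n a q m) (Cminus (RtoC 1) (Cmult a (RtoC (q ^ m))))
  end.

Definition qpoch_inf (a : C) (q : R) : C :=
  (real (Lim_seq (fun n => Re (qpoch_n a q n))),
   real (Lim_seq (fun n => Im (qpoch_n a q n)))).

Definition e_q (q : R) (x : C) : C := Cinv (qpoch_inf x q).

Definition CSeries (u : nat -> C) : C :=
  (Series (fun n => Re (u n)), Series (fun n => Im (u n))).

Definition powser (a : nat -> C) (z : C) : C :=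
  CSeries (fun l => Cmult (a l) (cpow z l)).

Definition MF (q : R) (a : nat -> C) (z : C) : C :=
  Cmult (powser a z) (e_q (q ^ 2) (Copp (Cmult z z))).

Definition Ms_coeff_bound (q s Cst : R) (a : nat -> C) : Prop :=
  forall l : nat, Cmod (a l) <= Cst * s ^ l * Rpower q (INR (l * l) / 2).

Definition jterm (q g0 : R) (g : R -> C) (k : Z) : C :=
  let x := powerRZ q k * g0 in
  Cmult (RtoC x) (Cplus (g x) (g (- x))).

Definition jterm_abs (q g0 : R) (g : R -> C) (k : Z) : R :=
  let x := powerRZ q k * g0 in
  Rabs x * (Cmod (g x) + Cmod (g (- x))).

Definition jackson_abs_conv (q g0 : R) (g : R -> C) : Prop :=
  ex_series (fun n => jterm_abs q g0 g (Z.of_nat n)) /\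
  ex_series (fun n => jterm_abs q g0 g (- Z.of_nat (S n))%Z).

(* int_gamma g = (1-q) sum_{k in Z} sum_eps q^k gamma g(eps q^k gamma) *)
Definition jackson (q g0 : R) (g : R -> C) : C :=
  Cmult (RtoC (1 - q))
    (Cplus (CSeries (fun n => jterm q g0 g (Z.of_nat n)))
           (CSeries (fun n => jterm q g0 g (- Z.of_nat (S n))%Z))).

(* Main.v *)
Require Import Defs.
From Stdlib Require Import Reals ZArith Lra Lia.
From Coquelicot Require Import Coquelicot.
Open Scope R_scope.

Lemma sum_n_S (a : nat -> R) n : @eq R (sum_n a (S n)) (sum_n a n + a (S n)).
Proof. rewrite sum_Sn. reflexivity. Qed.

Lemma sum_n_0 (a : nat -> R) : @eq R (sum_n a 0) (a 0%nat).
Proof. apply sum_O. Qed.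

Lemma sum_n_nonneg (a : nat -> R) N : (forall n, 0 <= a n) -> 0 <= sum_n a N.
Proof. intros H; induction N. rewrite sum_n_0; auto. rewrite sum_n_S. specialize (H (S N)). lra. Qed.

Lemma sum_n_mono (a : nat -> R) N k : (forall n, 0 <= a n) -> sum_n a N <= sum_n a (N + k).
Proof. intros H; induction k. rewrite Nat.add_0_r; lra.
  rewrite Nat.add_succ_r, sum_n_S. specialize (H (S (N+k))). lra. Qed.

Lemma series_nonneg_bound (a : nat -> R) B :
  (forall n, 0 <= a n) -> (forall N, sum_n a N <= B) -> ex_series a /\ Series a <= B.
Proof.
  intros H HB.
  assert (Hl : ex_finite_lim_seq (sum_n a)).
  { apply (ex_finite_lim_seq_incr _ B); auto. intros n; rewrite sum_n_S; specialize (H (S n)); lra. }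
  destruct Hl as [l Hl].
  assert (Hs : is_series a l) by exact Hl.
  split. exists l; exact Hs.
  rewrite (is_series_unique _ _ Hs).
  assert (Hc : is_lim_seq (fun _ : nat => B) B) by apply is_lim_seq_const.
  pose proof (is_lim_seq_le _ _ _ _ HB Hl Hc) as Hle. simpl in Hle. exact Hle.
Qed.

Lemma partial_le_series (a : nat -> R) N :
  (forall n, 0 <= a n) -> ex_series a -> sum_n a N <= Series a.
Proof.
  intros H [l Hl]. rewrite (is_series_unique _ _ Hl).
  assert (Hl' : is_lim_seq (fun n => sum_n a (N + n)) l).
  { apply (is_lim_seq_ext (fun n => sum_n a (n + N))). intros; rewrite Nat.add_comm; auto.
    apply (is_lim_seq_incr_n (sum_n a) N l). exact Hl. }
  assert (Hc : is_lim_seq (fun _ : nat => sum_n a N) (sum_n a N)) by apply is_lim_seq_const.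
  pose proof (is_lim_seq_le _ _ _ _ (fun n => sum_n_mono a N n H) Hc Hl') as Hle.
  simpl in Hle. exact Hle.
Qed.

Lemma term_le_series (a : nat -> R) N :
  (forall n, 0 <= a n) -> ex_series a -> a N <= Series a.
Proof.
  intros H He. eapply Rle_trans; [|apply (partial_le_series a N H He)].
  destruct N. rewrite sum_n_0; lra.
  rewrite sum_n_S. pose proof (sum_n_nonneg a N H). lra.
Qed.

Lemma ex_series_R_ext (a b : nat -> R) : (forall n, a n = b n) -> ex_series a -> ex_series b.
Proof. intros H Ha. exact (ex_series_ext a b H Ha). Qed.

Lemma ex_series_R_le (a b : nat -> R) :
  (forall n, Rabs (a n) <= b n) -> ex_series b -> ex_series a.
Proof. intros H Hb. apply (ex_series_le a b); auto. Qed.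

Lemma ex_series_R_plus (a b : nat -> R) : ex_series a -> ex_series b -> ex_series (fun n => a n + b n).
Proof. intros Ha Hb. exact (ex_series_plus a b Ha Hb). Qed.

Lemma ex_series_R_scal (c : R) (a : nat -> R) : ex_series a -> ex_series (fun n => c * a n).
Proof. intros Ha. exact (ex_series_scal_l c a Ha). Qed.

Lemma ex_series_R_minus (a b : nat -> R) : ex_series a -> ex_series b -> ex_series (fun n => a n - b n).
Proof. intros Ha Hb. apply (ex_series_R_ext (fun n => a n + (-1) * b n)). intros; ring.
  apply ex_series_R_plus; auto. apply ex_series_R_scal; auto. Qed.

Lemma series_finite_swap (u : nat -> nat -> R) N :
  (forall j, ex_series (u j)) ->
  ex_series (fun i => sum_n (fun j => u j i) N) /\
  Series (fun i => sum_n (fun j => u j i) N) = sum_n (fun j => Series (u j)) N.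
Proof.
  intros H. induction N.
  - split. apply (ex_series_R_ext (u 0%nat)). intros; rewrite sum_n_0; auto. auto.
    rewrite sum_n_0. apply Series_ext. intros; rewrite sum_n_0; auto.
  - destruct IHN as [IH1 IH2]. split.
    + apply (ex_series_R_ext (fun i => sum_n (fun j => u j i) N + u (S N) i)).
      intros; rewrite sum_n_S; auto. apply ex_series_R_plus; auto.
    + rewrite sum_n_S. rewrite <- IH2. rewrite <- Series_plus; auto.
      apply Series_ext. intros; rewrite sum_n_S; auto.
Qed.

Lemma fubini_nonneg (v : nat -> nat -> R) :
  (forall i j, 0 <= v i j) -> (forall i, ex_series (v i)) ->
  ex_series (fun i => Series (v i)) ->
  (forall j, ex_series (fun i => v i j)) /\
  ex_series (fun j => Series (fun i => v i j)) /\
  Series (fun j => Series (fun i => v i j)) = Series (fun i => Series (v i)).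
Proof.
  intros Hp Hi HS.
  assert (Hj : forall j, ex_series (fun i => v i j)).
  { intros j. apply (ex_series_R_le _ (fun i => Series (v i))); auto.
    intros i. rewrite Rabs_pos_eq; auto. apply term_le_series; auto. }
  assert (Hsn : forall i, 0 <= Series (v i)).
  { intros i. eapply Rle_trans. apply (Hp i 0%nat). apply term_le_series; auto. }
  assert (Hsn' : forall j, 0 <= Series (fun i => v i j)).
  { intros j. eapply Rle_trans. apply (Hp 0%nat j). apply (term_le_series (fun i => v i j)); auto. }
  destruct (series_nonneg_bound (fun j => Series (fun i => v i j)) (Series (fun i => Series (v i))))
    as [E1 E2]; auto.
  { intros N. destruct (series_finite_swap (fun j i => v i j) N Hj) as [A1 A2].
    rewrite <- A2. apply Series_le; auto. intros i; split.
    apply sum_n_nonneg; auto. apply partial_le_series; auto. }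
  split; auto. split; auto.
  destruct (series_nonneg_bound (fun i => Series (v i)) (Series (fun j => Series (fun i => v i j))))
    as [F1 F2]; auto.
  { intros N. destruct (series_finite_swap v N Hi) as [A1 A2].
    rewrite <- A2. apply Series_le; auto. intros j; split.
    apply sum_n_nonneg; auto. apply (partial_le_series (fun i => v i j)); auto. }
  lra.
Qed.

Lemma fubini_dom (u v : nat -> nat -> R) :
  (forall i j, Rabs (u i j) <= v i j) -> (forall i, ex_series (v i)) ->
  ex_series (fun i => Series (v i)) ->
  (forall i, ex_series (u i)) /\ (forall j, ex_series (fun i => u i j)) /\
  ex_series (fun i => Series (u i)) /\ ex_series (fun j => Series (fun i => u i j)) /\
  Series (fun j => Series (fun i => u i j)) = Series (fun i => Series (u i)).
Proof.
  intros Hd Hi HS.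
  assert (Hv0 : forall i j, 0 <= v i j).
  { intros i j. eapply Rle_trans. apply Rabs_pos. apply Hd. }
  set (w := fun i j => v i j + u i j).
  assert (Hw0 : forall i j, 0 <= w i j).
  { intros i j; unfold w. specialize (Hd i j). apply Rabs_le_between in Hd. lra. }
  assert (Hui : forall i, ex_series (u i)).
  { intros i; apply (ex_series_R_le _ (v i)); auto. }
  assert (Hwi : forall i, ex_series (w i)).
  { intros i; apply ex_series_R_plus; auto. }
  assert (HwS : ex_series (fun i => Series (w i))).
  { apply (ex_series_R_le _ (fun i => 2 * Series (v i))).
    intros i. rewrite Rabs_pos_eq. unfold w. rewrite Series_plus; auto.
    assert (Rabs (Series (u i)) <= Series (v i)).
    { eapply Rle_trans. apply Series_Rabs. apply (ex_series_R_le _ (v i)).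
      intros; rewrite Rabs_Rabsolu; auto. auto.
      apply Series_le; auto. intros n; split. apply Rabs_pos. auto. }
    apply Rabs_le_between in H. lra.
    eapply Rle_trans. apply (Hw0 i 0%nat). apply term_le_series; auto.
    apply ex_series_R_scal; auto. }
  destruct (fubini_nonneg v Hv0 Hi HS) as [V1 [V2 V3]].
  destruct (fubini_nonneg w Hw0 Hwi HwS) as [W1 [W2 W3]].
  assert (Huj : forall j, ex_series (fun i => u i j)).
  { intros j. apply (ex_series_R_ext (fun i => w i j - v i j)). intros; unfold w; ring.
    apply ex_series_R_minus; auto. }
  assert (Hsu : forall i, Series (u i) = Series (w i) - Series (v i)).
  { intros i. rewrite <- Series_minus; auto. apply Series_ext; intros; unfold w; ring. }
  assert (Hsu' : forall j, Series (fun i => u i j) = Series (fun i => w i j) - Series (fun i => v i j)).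
  { intros j. rewrite <- Series_minus; auto. apply Series_ext; intros; unfold w; ring. }
  split; auto. split; auto. split.
  { apply (ex_series_R_ext (fun i => Series (w i) - Series (v i))). intros; auto.
    apply ex_series_R_minus; auto. }
  split.
  { apply (ex_series_R_ext (fun j => Series (fun i => w i j) - Series (fun i => v i j))). intros; auto.
    apply ex_series_R_minus; auto. }
  rewrite (Series_ext _ _ Hsu'), (Series_ext _ _ Hsu).
  rewrite Series_minus, Series_minus; auto. rewrite W3, V3; auto.
Qed.

Lemma pow_le_one (x : R) n : 0 <= x <= 1 -> x ^ n <= 1.
Proof. intros H. induction n; simpl. lra.
  assert (0 <= x ^ n) by (apply pow_le; lra). nra. Qed.

Lemma pow_decr_exp (x : R) m n : 0 <= x <= 1 -> (m <= n)%nat -> x ^ n <= x ^ m.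
Proof. intros H Hmn. replace n with (m + (n - m))%nat by lia. rewrite pow_add.
  assert (0 <= x ^ m) by (apply pow_le; lra).
  assert (x ^ (n - m) <= 1) by (apply pow_le_one; lra).
  assert (0 <= x ^ (n - m)) by (apply pow_le; lra). nra. Qed.

Lemma gauss_bound (t b : R) : 0 < t < 1 -> 0 < b ->
  exists M, 0 < M /\ forall d : nat, b ^ d * t ^ (d * d) <= M.
Proof.
  intros Ht Hb.
  destruct (pow_lt_1_zero t ltac:(rewrite Rabs_pos_eq; lra) (/ b) ltac:(apply Rinv_0_lt_compat; lra))
    as [T HT].
  exists (Rmax 1 b ^ T). split. apply pow_lt. unfold Rmax; destruct (Rle_dec 1 b); lra.
  intros d. destruct (le_lt_dec T d) as [Hd|Hd].
  - specialize (HT d Hd). rewrite Rabs_pos_eq in HT by (apply pow_le; lra).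
    rewrite pow_mult. rewrite <- Rpow_mult_distr.
    assert (Hx : 0 <= b * t ^ d <= 1).
    { split. assert (0 <= t ^ d) by (apply pow_le; lra). nra.
      apply Rmult_lt_compat_l with (r := b) in HT; auto. rewrite Rinv_r in HT; lra. }

    eapply Rle_trans. apply pow_le_one; auto.
    apply pow_R1_Rle. unfold Rmax; destruct (Rle_dec 1 b); lra.
  - assert (H1 : t ^ (d * d) <= 1) by (apply pow_le_one; lra).
    assert (H2 : b ^ d <= Rmax 1 b ^ d) by (apply pow_incr; split; [lra| apply Rmax_r]).
    assert (H3 : Rmax 1 b ^ d <= Rmax 1 b ^ T) by (apply Rle_pow; [apply Rmax_l| lia]).
    assert (0 <= b ^ d) by (apply pow_le; lra).
    assert (0 <= t ^ (d*d)) by (apply pow_le; lra). nra.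
Qed.

(* completing the square *)
Lemma gauss_square (t b : R) : 0 < t < 1 -> 0 < b ->
  exists M, 0 < M /\ forall l a : nat, b ^ l * t ^ (l * l) * t ^ (a * a) <= M * b ^ a * t ^ (2 * a * l).
Proof.
  intros Ht Hb.
  destruct (gauss_bound t b Ht Hb) as [M1 [HM1 H1]].
  destruct (gauss_bound t (/ b) Ht ltac:(apply Rinv_0_lt_compat; lra)) as [M2 [HM2 H2]].
  exists (M1 + M2). split. lra. intros l a.
  assert (Hba : 0 < b ^ a) by (apply pow_lt; lra).
  assert (Hta : 0 < t ^ (2 * a * l)) by (apply pow_lt; lra).
  destruct (le_lt_dec a l) as [Hal|Hal].
  - replace l with (a + (l - a))%nat by lia. set (d := (l - a)%nat).
    assert (E : b ^ (a + d) * t ^ ((a + d) * (a + d)) * t ^ (a * a) =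
      (b ^ a * t ^ (2 * a * (a + d))) * (b ^ d * t ^ (d * d))).
    { assert (Et : t ^ ((a + d) * (a + d)) * t ^ (a * a) = t ^ (2 * a * (a + d)) * t ^ (d * d))
        by (rewrite <- !pow_add; f_equal; lia).
      rewrite Rmult_assoc, Et, pow_add. ring. }
    rewrite E. specialize (H1 d). specialize (H2 d).
    assert (0 <= (/ b) ^ d * t ^ (d * d)) by (apply Rmult_le_pos; apply pow_le; [apply Rlt_le, Rinv_0_lt_compat|]; lra).
    assert (Hp : 0 < b ^ a * t ^ (2 * a * (a + d))) by (apply Rmult_lt_0_compat; auto; apply pow_lt; lra).
    apply Rle_trans with ((b ^ a * t ^ (2 * a * (a + d))) * (M1 + M2)).
    apply Rmult_le_compat_l; lra. nra.
  - replace a with (l + (a - l))%nat by lia. set (d := (a - l)%nat).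
    assert (Hbd : b ^ l = b ^ (l + d) * (/ b) ^ d).
    { rewrite pow_add, pow_inv. field. apply pow_nonzero; lra. }
    assert (E : b ^ l * t ^ (l * l) * t ^ ((l + d) * (l + d)) =
      (b ^ (l + d) * t ^ (2 * (l + d) * l)) * ((/ b) ^ d * t ^ (d * d))).
    { assert (Et : t ^ (l * l) * t ^ ((l + d) * (l + d)) = t ^ (2 * (l + d) * l) * t ^ (d * d))
        by (rewrite <- !pow_add; f_equal; lia).
      rewrite Rmult_assoc, Et, Hbd. ring. }
    rewrite E. specialize (H1 d). specialize (H2 d).
    assert (0 <= b ^ d * t ^ (d * d)) by (apply Rmult_le_pos; apply pow_le; lra).
    assert (Hp : 0 < b ^ (l + d) * t ^ (2 * (l + d) * l)) by (apply Rmult_lt_0_compat; apply pow_lt; lra).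
    apply Rle_trans with ((b ^ (l + d) * t ^ (2 * (l + d) * l)) * (M1 + M2)).
    apply Rmult_le_compat_l; lra. nra.
Qed.

Lemma gauss_summable (t b : R) : 0 < t < 1 -> 0 < b ->
  ex_series (fun d => b ^ d * t ^ (d * d)).
Proof.
  intros Ht Hb. destruct (gauss_bound t (2 * b) Ht ltac:(lra)) as [M [HM H]].
  apply (ex_series_R_le _ (fun d => M * (/ 2) ^ d)).
  intros d.
  rewrite Rabs_pos_eq by (apply Rmult_le_pos; apply pow_le; lra).
  specialize (H d). rewrite Rpow_mult_distr in H.
  assert (0 < 2 ^ d) by (apply pow_lt; lra).
  rewrite pow_inv. apply Rmult_le_reg_l with (2 ^ d); auto.
  replace (2 ^ d * (M * / 2 ^ d)) with M by (field; lra). nra.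
  apply (ex_series_R_scal M (fun d => (/2) ^ d)). apply ex_series_geom. rewrite Rabs_pos_eq; lra.
Qed.

Fixpoint Pw (q x : R) (n : nat) : R :=
  match n with O => 1 | S m => Pw q x m * (1 + x * x * (q ^ 2) ^ m) end.

Definition Wf (q x : R) : R := real (Lim_seq (Pw q x)).
Definition wf (q x : R) : R := / Wf q x.

Lemma sq_nn (x : R) : 0 <= x * x.
Proof. pose proof (Rle_0_sqr x). unfold Rsqr in H. exact H. Qed.

Lemma Pw_S q x n : Pw q x (S n) = Pw q x n * (1 + x * x * (q ^ 2) ^ n).
Proof. reflexivity. Qed.

Lemma Pw_ge1 q x n : 0 < q -> 1 <= Pw q x n.
Proof. intros Hq. induction n. simpl; lra. rewrite Pw_S.
  assert (0 <= x * x * (q ^ 2) ^ n).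
  { apply Rmult_le_pos. apply sq_nn. apply pow_le. apply pow_le; lra. }
  rewrite <- (Rmult_1_r 1). apply Rmult_le_compat; lra. Qed.

Lemma Pw_incr q x n : 0 < q -> Pw q x n <= Pw q x (S n).
Proof. intros Hq. rewrite Pw_S. pose proof (Pw_ge1 q x n Hq).
  assert (0 <= x * x * (q ^ 2) ^ n).
  { apply Rmult_le_pos. apply sq_nn. apply pow_le. apply pow_le; lra. }
  rewrite <- (Rmult_1_r (Pw q x n)) at 1. apply Rmult_le_compat_l; lra. Qed.

Lemma Pw_bound q x n : 0 < q < 1 -> Pw q x n <= exp (x * x / (1 - q ^ 2)).
Proof.
  intros Hq. set (Q := q ^ 2).
  assert (HQ : 0 < Q < 1) by (unfold Q; simpl; nra).
  assert (H : Pw q x n <= exp (x * x * (1 - Q ^ n) / (1 - Q))).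
  { induction n.
    - simpl. replace (x * x * (1 - 1) / (1 - Q)) with 0 by (field; lra). rewrite exp_0; lra.
    - rewrite Pw_S. fold Q. eapply Rle_trans.
      apply Rmult_le_compat. pose proof (Pw_ge1 q x n (proj1 Hq)); lra.
      assert (0 <= x * x * Q ^ n) by (apply Rmult_le_pos; [apply sq_nn| apply pow_le; lra]). lra.
      exact IHn. apply exp_ineq1_le.
      rewrite <- exp_plus. right; f_equal; simpl; field; lra. }
  eapply Rle_trans. exact H.
  assert (x * x * (1 - Q ^ n) / (1 - Q) <= x * x / (1 - Q)).
  { unfold Rdiv. apply Rmult_le_compat_r. apply Rlt_le, Rinv_0_lt_compat; lra.
    assert (0 <= Q ^ n) by (apply pow_le; lra). pose proof (sq_nn x). nra. }
  destruct H0. apply Rlt_le, exp_increasing; auto. rewrite H0; lra.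
Qed.

Lemma Pw_lim q x : 0 < q < 1 -> is_lim_seq (Pw q x) (Wf q x).
Proof.
  intros Hq.
  assert (He : ex_finite_lim_seq (Pw q x)).
  { apply (ex_finite_lim_seq_incr _ (exp (x * x / (1 - q ^ 2)))).
    intros; apply Pw_incr; lra. intros; apply Pw_bound; auto. }
  destruct He as [l Hl]. unfold Wf. rewrite (is_lim_seq_unique _ _ Hl). simpl. exact Hl.
Qed.

Lemma Pw_mono q x n k : 0 < q -> Pw q x n <= Pw q x (n + k).
Proof. intros Hq. induction k. rewrite Nat.add_0_r; lra.
  rewrite Nat.add_succ_r. eapply Rle_trans. exact IHk. apply Pw_incr; auto. Qed.

Lemma Pw_le_W q x n : 0 < q < 1 -> Pw q x n <= Wf q x.
Proof.
  intros Hq.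
  assert (Hl : is_lim_seq (fun k => Pw q x (n + k)) (Wf q x)).
  { apply (is_lim_seq_ext (fun k => Pw q x (k + n))). intros; rewrite Nat.add_comm; auto.
    apply (is_lim_seq_incr_n (Pw q x) n). apply Pw_lim; auto. }
  pose proof (is_lim_seq_le (fun _ => Pw q x n) _ _ _ (fun k => Pw_mono q x n k (proj1 Hq))
    (is_lim_seq_const _) Hl) as H. simpl in H. exact H.
Qed.

Lemma W_ge1 q x : 0 < q < 1 -> 1 <= Wf q x.
Proof. intros Hq. apply (Rle_trans _ (Pw q x 0)). simpl; lra. apply Pw_le_W; auto. Qed.

Lemma Pw_shift q x n : Pw q x (S n) = (1 + x * x) * Pw q (q * x) n.
Proof.
  induction n. simpl. ring.
  rewrite Pw_S, IHn, Pw_S. simpl. ring.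
Qed.

Lemma W_shift q x : 0 < q < 1 -> Wf q x = (1 + x * x) * Wf q (q * x).
Proof.
  intros Hq.
  assert (H1 : is_lim_seq (fun n => Pw q x (S n)) (Wf q x)).
  { apply (is_lim_seq_incr_1 (Pw q x)). apply Pw_lim; auto. }
  assert (H2 : is_lim_seq (fun n => (1 + x * x) * Pw q (q * x) n) ((1 + x * x) * Wf q (q * x))).
  { apply (is_lim_seq_scal_l (Pw q (q * x)) (1 + x * x) (Wf q (q * x))). apply Pw_lim; auto. }
  assert (H3 : is_lim_seq (fun n => Pw q x (S n)) ((1 + x * x) * Wf q (q * x))).
  { apply (is_lim_seq_ext _ _ _ (fun n => eq_sym (Pw_shift q x n)) H2). }
  pose proof (is_lim_seq_unique _ _ H1) as E1. pose proof (is_lim_seq_unique _ _ H3) as E3.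
  rewrite E1 in E3. injection E3. auto.
Qed.

Lemma Pw_even q x n : Pw q (- x) n = Pw q x n.
Proof. induction n. reflexivity. rewrite !Pw_S, IHn. f_equal. ring. Qed.

Lemma W_even q x : Wf q (- x) = Wf q x.
Proof. unfold Wf. f_equal. apply Lim_seq_ext. intros; apply Pw_even. Qed.

Lemma wf_even q x : wf q (- x) = wf q x.
Proof. unfold wf; rewrite W_even; auto. Qed.

Lemma wf_pos q x : 0 < q < 1 -> 0 < wf q x.
Proof. intros Hq. unfold wf. apply Rinv_0_lt_compat. pose proof (W_ge1 q x Hq); lra. Qed.

Lemma wf_le1 q x : 0 < q < 1 -> wf q x <= 1.
Proof. intros Hq. unfold wf. pose proof (W_ge1 q x Hq).
  rewrite <- Rinv_1. apply Rinv_le_contravar; lra. Qed.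

Lemma wf_shift q x : 0 < q < 1 -> wf q (q * x) = (1 + x * x) * wf q x.
Proof. intros Hq. unfold wf. rewrite (W_shift q x Hq).
  pose proof (W_ge1 q (q * x) Hq). pose proof (sq_nn x). field. split; lra. Qed.

Lemma wf_upper q g a m : 0 < q < 1 -> 0 < g ->
  (g / q ^ a) ^ m * wf q (g / q ^ a) * g ^ (2 * a) * q ^ (a * m) <= g ^ m * q ^ (a * (a + 1)).
Proof.
  intros Hq Hg. induction a.
  - simpl. replace (g / 1) with g by field.
    pose proof (wf_le1 q g Hq). pose proof (wf_pos q g Hq).
    assert (0 <= g ^ m) by (apply pow_le; lra). nra.
  - set (x := g / q ^ a) in *. set (x' := g / q ^ S a).
    assert (Hqa : 0 < q ^ a) by (apply pow_lt; lra).
    assert (Hx : x = q * x') by (unfold x, x'; simpl; field; lra).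
    assert (Hx'p : 0 < x') by (unfold x'; apply Rdiv_lt_0_compat; auto; apply pow_lt; lra).
    assert (Hw : wf q x = (1 + x' * x') * wf q x') by (rewrite Hx; apply wf_shift; auto).
    assert (Hwp : 0 < wf q x') by (apply wf_pos; auto).
    assert (Hxx : x' * x' * q ^ (2 * S a) = g * g).
    { unfold x'. replace (2 * S a)%nat with (S a + S a)%nat by lia. rewrite pow_add.
      field. apply pow_nonzero; lra. }
    assert (E : x' ^ m * wf q x' * g ^ (2 * S a) * q ^ (S a * m) =
       (x ^ m * wf q x' * g ^ (2 * a) * q ^ (a * m)) * (g * g)).
    { rewrite Hx, Rpow_mult_distr. replace (2 * S a)%nat with (S (S (2 * a))) by lia.
      replace (S a * m)%nat with (m + a * m)%nat by lia. rewrite pow_add. simpl. ring. }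
    rewrite E.
    assert (Hle : x ^ m * wf q x' * g ^ (2 * a) * q ^ (a * m) * (x' * x')
                  <= g ^ m * q ^ (a * (a + 1))).
    { eapply Rle_trans; [|exact IHa]. rewrite Hw.
      assert (0 <= x ^ m * wf q x' * g ^ (2 * a) * q ^ (a * m)).
      { repeat apply Rmult_le_pos; try apply pow_le; try lra. unfold x. apply Rlt_le, Rdiv_lt_0_compat; auto. }
      assert (0 <= x' * x') by apply sq_nn. nra. }
    rewrite <- Hxx.
    replace (x ^ m * wf q x' * g ^ (2 * a) * q ^ (a * m) * (x' * x' * q ^ (2 * S a)))
      with ((x ^ m * wf q x' * g ^ (2 * a) * q ^ (a * m) * (x' * x')) * q ^ (2 * S a)) by ring.
    replace (g ^ m * q ^ (S a * (S a + 1))) with (g ^ m * q ^ (a * (a + 1)) * q ^ (2 * S a))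
      by (rewrite Rmult_assoc, <- pow_add; f_equal; f_equal; lia).
    apply Rmult_le_compat_r. apply pow_le; lra. exact Hle.
Qed.

(* rho_p = (-1)^p Q^{p(p+1)/2} / (Q;Q)_p with Q = q^2 *)
Fixpoint rho (q : R) (p : nat) : R :=
  match p with O => 1 | S m => - (q ^ 2) ^ (S m) / (1 - (q ^ 2) ^ (S m)) * rho q m end.

Fixpoint prodQ (q : R) (p : nat) : R :=
  match p with O => 1 | S m => prodQ q m * (1 - (q ^ 2) ^ (S m)) end.

Lemma prodQ_S q p : prodQ q (S p) = prodQ q p * (1 - (q ^ 2) ^ (S p)).
Proof. reflexivity. Qed.
Lemma rho_S q p : rho q (S p) = - (q ^ 2) ^ (S p) / (1 - (q ^ 2) ^ (S p)) * rho q p.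
Proof. reflexivity. Qed.

Lemma Q_facts q : 0 < q < 1 -> 0 < q ^ 2 < 1.
Proof. intros; simpl; nra. Qed.

Lemma Qpow_facts q n : 0 < q < 1 -> 0 < (q ^ 2) ^ S n < 1.
Proof. intros Hq. pose proof (Q_facts q Hq). split. apply pow_lt; lra.
  apply pow_lt_1_compat; [lra|lia]. Qed.

Lemma prodQ_pos q p : 0 < q < 1 -> 0 < prodQ q p.
Proof. intros Hq. induction p. simpl; lra. rewrite prodQ_S. pose proof (Qpow_facts q p Hq).
  apply Rmult_lt_0_compat; lra. Qed.

Lemma rho_abs q p : 0 < q < 1 -> Rabs (rho q p) * prodQ q p = q ^ (p * (p + 1)).
Proof.
  intros Hq. induction p. simpl. rewrite Rabs_R1. ring.
  change (rho q (S p)) with (- (q ^ 2) ^ (S p) / (1 - (q ^ 2) ^ (S p)) * rho q p).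
  change (prodQ q (S p)) with (prodQ q p * (1 - (q ^ 2) ^ (S p))).
  pose proof (Qpow_facts q p Hq).
  rewrite Rabs_mult. unfold Rdiv. rewrite Rabs_mult, Rabs_Ropp, Rabs_pos_eq by lra.
  rewrite Rabs_pos_eq by (apply Rlt_le, Rinv_0_lt_compat; lra).
  replace (S p * (S p + 1))%nat with (p * (p + 1) + 2 * S p)%nat by lia.
  rewrite pow_add, <- IHp, pow_mult. field. lra.
Qed.

Lemma exp_mono x y : x <= y -> exp x <= exp y.
Proof. intros H. destruct (Rle_lt_or_eq_dec _ _ H). left; apply exp_increasing; auto. subst; lra. Qed.

Lemma one_minus_exp_bound y : 0 <= y < 1 -> exp (- (y / (1 - y))) <= 1 - y.
Proof.
  intros Hy. pose proof (exp_ineq1_le (y / (1 - y))).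
  assert (1 + y / (1 - y) = / (1 - y)) by (field; lra).
  rewrite exp_Ropp. rewrite H0 in H.
  assert (0 < / (1 - y)) by (apply Rinv_0_lt_compat; lra).
  apply Rle_trans with (/ / (1 - y)). apply Rinv_le_contravar; auto.
  rewrite Rinv_inv; lra.
Qed.

Lemma prodQ_lower q : 0 < q < 1 -> exists k, 0 < k /\ forall p, k <= prodQ q p.
Proof.
  intros Hq. set (Q := q ^ 2). pose proof (Q_facts q Hq) as HQ. fold Q in HQ.
  exists (exp (- (Q / ((1 - Q) * (1 - Q))))). split. apply exp_pos.
  assert (H : forall p, exp (- ((Q - Q ^ (S p)) / ((1 - Q) * (1 - Q)))) <= prodQ q p).
  { induction p.
    - simpl. replace ((Q - Q * 1) / ((1 - Q) * (1 - Q))) with 0 by (field; lra).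
      rewrite Ropp_0, exp_0; lra.
    - change (prodQ q (S p)) with (prodQ q p * (1 - Q ^ (S p))).
      assert (Hy : 0 <= Q ^ S p < 1) by (pose proof (Qpow_facts q p Hq); fold Q in H; lra).
      pose proof (one_minus_exp_bound _ Hy) as Hb.
      assert (Hb2 : exp (- (Q ^ S p / (1 - Q))) <= exp (- (Q ^ S p / (1 - Q ^ S p)))).
      { apply exp_mono. apply Ropp_le_contravar.
        assert (Q ^ S p <= Q).
        { rewrite <- (pow_1 Q) at 2. apply pow_decr_exp; [lra|lia]. }
        unfold Rdiv. apply Rmult_le_compat_l. lra. apply Rinv_le_contravar; lra. }
      apply Rle_trans with (exp (- ((Q - Q ^ S p) / ((1 - Q) * (1 - Q)))) * exp (- (Q ^ S p / (1 - Q)))).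
      + rewrite <- exp_plus. right. f_equal. change (Q ^ S (S p)) with (Q * Q ^ S p). field. lra.
      + apply Rmult_le_compat; [left; apply exp_pos | left; apply exp_pos | exact IHp | lra]. }
  intros p. eapply Rle_trans; [|apply H].
  assert (0 < Q ^ S p) by (apply pow_lt; lra).
  assert ((Q - Q ^ S p) / ((1 - Q) * (1 - Q)) <= Q / ((1 - Q) * (1 - Q))).
  { unfold Rdiv. apply Rmult_le_compat_r. left; apply Rinv_0_lt_compat; nra. lra. }
  apply exp_mono. lra.
Qed.

Lemma rho_bound q : 0 < q < 1 -> exists k, 0 < k /\ forall p, Rabs (rho q p) <= q ^ (p * (p + 1)) / k.
Proof.
  intros Hq. destruct (prodQ_lower q Hq) as [k [Hk H]]. exists k. split; auto.
  intros p. pose proof (rho_abs q p Hq). pose proof (prodQ_pos q p Hq). specialize (H p).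
  apply Rmult_le_reg_r with k; auto. unfold Rdiv. rewrite Rmult_assoc, Rinv_l, Rmult_1_r by lra.
  rewrite <- H0. apply Rmult_le_compat_l. apply Rabs_pos. auto.
Qed.

Definition Rf (q x : R) : R := Series (fun p => rho q p * x ^ p).

Lemma rho_abs_series q x : 0 < q < 1 -> ex_series (fun p => Rabs (rho q p * x ^ p)).
Proof.
  intros Hq. destruct (rho_bound q Hq) as [k [Hk Hb]].
  apply (ex_series_R_le _ (fun p => / k * ((Rabs x + 1) ^ p * q ^ (p * p)))).
  - intros p. rewrite Rabs_Rabsolu, Rabs_mult, <- RPow_abs.
    assert (H1 : Rabs x ^ p <= (Rabs x + 1) ^ p) by (apply pow_incr; split; [apply Rabs_pos|lra]).
    assert (H2 : q ^ (p * (p + 1)) <= q ^ (p * p)) by (apply pow_decr_exp; [lra|nia]).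
    specialize (Hb p). unfold Rdiv in Hb.
    assert (0 <= Rabs x ^ p) by (apply pow_le, Rabs_pos).
    assert (0 <= q ^ (p * (p+1))) by (apply pow_le; lra).
    assert (0 < / k) by (apply Rinv_0_lt_compat; auto).
    apply Rle_trans with (q ^ (p * (p + 1)) * / k * Rabs x ^ p).
    apply Rmult_le_compat_r; auto.
    replace (/ k * ((Rabs x + 1) ^ p * q ^ (p * p))) with (q ^ (p * p) * / k * (Rabs x + 1) ^ p) by ring.
    apply Rmult_le_compat; auto. apply Rmult_le_pos; lra. apply Rmult_le_compat_r; lra.
  - apply ex_series_R_scal. apply gauss_summable. auto. pose proof (Rabs_pos x); lra.
Qed.

Lemma rho_series q x : 0 < q < 1 -> ex_series (fun p => rho q p * x ^ p).
Proof. intros; apply ex_series_Rabs, rho_abs_series; auto. Qed.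

Lemma Rf_func q x : 0 < q < 1 -> Rf q x = (1 - q ^ 2 * x) * Rf q (q ^ 2 * x).
Proof.
  intros Hq. set (Q := q ^ 2). unfold Rf.
  rewrite Series_incr_1 by (apply rho_series; auto).
  rewrite (Series_incr_1 (fun p => rho q p * (Q * x) ^ p)) by (apply rho_series; auto).
  assert (E : forall p, rho q (S p) * x ^ S p =
     rho q (S p) * (Q * x) ^ S p + (- (Q * x)) * (rho q p * (Q * x) ^ p)).
  { intros p. rewrite rho_S. fold Q. pose proof (Qpow_facts q p Hq) as HH. fold Q in HH.
    assert (Hn : 1 - Q * Q ^ p <> 0) by (change (Q * Q ^ p) with (Q ^ S p); lra).
    rewrite !Rpow_mult_distr. rewrite <- !tech_pow_Rmult. field. exact Hn. }
  rewrite (Series_ext _ _ E).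
  assert (Ex1 : ex_series (fun p => rho q (S p) * (Q * x) ^ S p)).
  { apply (ex_series_incr_1 (fun p => rho q p * (Q * x) ^ p)). apply rho_series; auto. }
  rewrite Series_plus; auto. rewrite Series_scal_l.
  rewrite (Series_incr_1 (fun p => rho q p * (Q * x) ^ p)) by (apply rho_series; auto).
  simpl. ring.
  apply ex_series_R_scal. apply rho_series; auto.
Qed.

Lemma Rf_zero q r : 0 < q < 1 -> Rf q (/ (q ^ 2) ^ (S r)) = 0.
Proof.
  intros Hq. pose proof (Q_facts q Hq) as HQ. induction r.
  - rewrite Rf_func by auto. simpl (_ ^ 1). rewrite Rmult_1_r.
    rewrite Rinv_r by lra. ring.
  - rewrite Rf_func by auto.
    replace (q ^ 2 * / (q ^ 2) ^ S (S r)) with (/ (q ^ 2) ^ S r).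
    rewrite IHr. ring. change ((q ^ 2) ^ S (S r)) with (q ^ 2 * (q ^ 2) ^ S r).
    field. split. apply pow_nonzero; lra. lra.
Qed.

Lemma Rf_near1 q : 0 < q < 1 -> exists B, 0 <= B /\ forall y, Rabs y <= 1 -> Rabs (Rf q y - 1) <= B * Rabs y.
Proof.
  intros Hq.
  assert (Ha : ex_series (fun p => Rabs (rho q (S p)))).
  { apply (ex_series_incr_1 (fun p => Rabs (rho q p))).
    apply (ex_series_R_ext (fun p => Rabs (rho q p * 1 ^ p))). intros; rewrite pow1, Rmult_1_r; auto.
    apply rho_abs_series; auto. }
  exists (Series (fun p => Rabs (rho q (S p)))). split.
  { eapply Rle_trans. apply (Rabs_pos (rho q 1)). apply (term_le_series (fun p => Rabs (rho q (S p))) 0); auto.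
    intros; apply Rabs_pos. }
  intros y Hy. unfold Rf. rewrite Series_incr_1 by (apply rho_series; auto).
  simpl (rho q 0 * y ^ 0). rewrite Rmult_1_r.
  replace (1 + Series (fun k => rho q (S k) * y ^ S k) - 1) with (y * Series (fun k => rho q (S k) * y ^ k)).
  2: { rewrite <- Series_scal_l. simpl. rewrite Rplus_comm. unfold Rminus. rewrite Rplus_assoc, Rplus_opp_r, Rplus_0_r.
       apply Series_ext; intros; ring. }
  rewrite Rabs_mult, (Rmult_comm _ (Rabs y)). apply Rmult_le_compat_l. apply Rabs_pos.
  eapply Rle_trans. apply Series_Rabs.
  apply (ex_series_R_le _ (fun p => Rabs (rho q (S p)))); auto.
  intros p. rewrite Rabs_Rabsolu, Rabs_mult. rewrite <- (Rmult_1_r (Rabs (rho q (S p)))) at 2.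
  apply Rmult_le_compat_l. apply Rabs_pos. rewrite <- RPow_abs. apply pow_le_one. split; [apply Rabs_pos|auto].
  apply Series_le; auto. intros p; split. apply Rabs_pos.
  rewrite Rabs_mult. rewrite <- (Rmult_1_r (Rabs (rho q (S p)))) at 2.
  apply Rmult_le_compat_l. apply Rabs_pos. rewrite <- RPow_abs. apply pow_le_one. split; [apply Rabs_pos|auto].
Qed.

Lemma Rf_pos q k : 0 < q < 1 -> 0 < Rf q ((q ^ 2) ^ k).
Proof.
  intros Hq. pose proof (Q_facts q Hq) as HQ. set (Q := q ^ 2) in *.
  destruct (Rf_near1 q Hq) as [B [HB H]].
  destruct (pow_lt_1_zero Q ltac:(rewrite Rabs_pos_eq; lra) (/ (2 * B + 2)) ltac:(apply Rinv_0_lt_compat; lra))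
    as [N HN].
  assert (Hfar : forall j, 0 < Rf q (Q ^ (j + N))).
  { intros j. specialize (H (Q ^ (j + N))).
    assert (H1 : Rabs (Q ^ (j + N)) <= Rabs (Q ^ N)).
    { rewrite !Rabs_pos_eq by (apply pow_le; lra). apply pow_decr_exp; [lra|lia]. }
    specialize (HN N (le_n N)).
    assert (H2 : Rabs (Q ^ (j + N)) <= 1).
    { eapply Rle_trans. exact H1. left. eapply Rlt_trans. exact HN.
      rewrite <- Rinv_1. apply Rinv_lt_contravar; [rewrite Rmult_1_l|]; lra. }
    specialize (H H2). apply Rabs_le_between in H.
    assert (B * Rabs (Q ^ (j + N)) < 1).
    { apply Rle_lt_trans with (B * / (2 * B + 2)).
      apply Rmult_le_compat_l; lra.
      apply Rmult_lt_reg_r with (2 * B + 2). lra. rewrite Rmult_assoc, Rinv_l by lra. lra. }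
    lra. }
  assert (Hback : forall m k, 0 < Rf q (Q ^ (k + m)) -> 0 < Rf q (Q ^ k)).
  { induction m; intros k0 Hk0. rewrite Nat.add_0_r in Hk0; auto.
    assert (Hk1 : 0 < Rf q (Q ^ (S k0 + m))) by (replace (S k0 + m)%nat with (k0 + S m)%nat by lia; auto).
    assert (0 < Rf q (Q ^ S k0)) by (apply (IHm (S k0) Hk1)).
    rewrite Rf_func by auto. fold Q. apply Rmult_lt_0_compat.
    assert (Q * Q ^ k0 < 1) by (change (Q * Q ^ k0) with (Q ^ S k0); apply pow_lt_1_compat; [lra|lia]). lra.
    change (Q * Q ^ k0) with (Q ^ S k0). auto. }
  apply (Hback N). apply Hfar.
Qed.

Definition Tp (q z : R) (p0 : nat) : R := Series (fun p => rho q p / (1 - z * (q ^ 2) ^ (p + p0))).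

Lemma Tp_pos q z p0 : 0 < q < 1 -> 0 < z < 1 -> 0 < Tp q z p0.
Proof.
  intros Hq Hz. pose proof (Q_facts q Hq) as HQ. set (Q := q ^ 2) in *.
  set (u := fun p k => rho q p * (z * Q ^ (p + p0)) ^ k).
  set (v := fun (p k : nat) => Rabs (rho q p) * z ^ k).
  assert (Hg : forall p, 0 <= z * Q ^ (p + p0) < 1).
  { intros p. assert (0 <= Q ^ (p + p0) <= 1) by (split; [apply pow_le; lra| apply pow_le_one; lra]). nra. }
  assert (Hdom : forall p k, Rabs (u p k) <= v p k).
  { intros p k. unfold u, v. rewrite Rabs_mult. apply Rmult_le_compat_l. apply Rabs_pos.
    rewrite Rabs_pos_eq by (apply pow_le; specialize (Hg p); lra). apply pow_incr.
    specialize (Hg p). assert (Q ^ (p + p0) <= 1) by (apply pow_le_one; lra). nra. }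
  assert (Hvs : forall p, is_series (v p) (Rabs (rho q p) * / (1 - z))).
  { intros p. unfold v. apply (is_series_scal_l (Rabs (rho q p)) (fun k => z ^ k)).
    apply is_series_geom. rewrite Rabs_pos_eq; lra. }
  assert (Hv1 : forall p, ex_series (v p)) by (intros p; eexists; apply Hvs).
  assert (Hv2 : ex_series (fun p => Series (v p))).
  { apply (ex_series_R_ext (fun p => / (1 - z) * Rabs (rho q p * 1 ^ p))).
    intros p. rewrite (is_series_unique _ _ (Hvs p)). rewrite pow1, Rmult_1_r. ring.
    apply ex_series_R_scal. apply rho_abs_series; auto. }
  destruct (fubini_dom u v Hdom Hv1 Hv2) as [F1 [F2 [F3 [F4 F5]]]].
  assert (Hus : forall p, Series (u p) = rho q p / (1 - z * Q ^ (p + p0))).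
  { intros p. apply is_series_unique. unfold u.
    apply (is_series_scal_l (rho q p) (fun k => (z * Q ^ (p + p0)) ^ k)).
    apply is_series_geom. rewrite Rabs_pos_eq; specialize (Hg p); lra. }
  assert (Hus' : forall k, Series (fun p => u p k) = (z * Q ^ p0) ^ k * Rf q (Q ^ k)).
  { intros k. unfold Rf. rewrite <- Series_scal_l. apply Series_ext. intros p. unfold u.
    assert (A : (Q ^ (p + p0)) ^ k = (Q ^ p0) ^ k * (Q ^ k) ^ p)
      by (rewrite <- !pow_mult, <- pow_add; f_equal; nia).
    rewrite Rpow_mult_distr, A, Rpow_mult_distr. ring. }
  unfold Tp. fold Q. rewrite <- (Series_ext _ _ Hus). rewrite <- F5.
  rewrite (Series_ext _ _ Hus').
  eapply Rlt_le_trans; [|apply (term_le_series _ 0)].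
  simpl. rewrite Rmult_1_l. apply (Rf_pos q 0 Hq).
  intros k. apply Rmult_le_pos. apply pow_le. assert (0 <= Q ^ p0) by (apply pow_le; lra). nra.
  left; apply Rf_pos; auto.
  apply (ex_series_R_ext _ _ Hus'). auto.
Qed.

Fixpoint nu (q u : R) (i : nat) : R :=
  match i with O => 1 | S m => nu q u m * (u / q ^ (2 * m + 1) - 1) end.

Lemma nu_S q u i : nu q u (S i) = nu q u i * (u / q ^ (2 * i + 1) - 1).
Proof. reflexivity. Qed.

Inductive is_poly : (R -> R) -> Prop :=
| ip_const c : is_poly (fun _ => c)
| ip_mulx g : is_poly g -> is_poly (fun u => u * g u)
| ip_add g h : is_poly g -> is_poly h -> is_poly (fun u => g u + h u)
| ip_scal c g : is_poly g -> is_poly (fun u => c * g u)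
| ip_ext g h : is_poly g -> (forall u, g u = h u) -> is_poly h.

Lemma ip_mullin g a b : is_poly g -> is_poly (fun u => g u * (a * u + b)).
Proof. intros H. apply (ip_ext (fun u => a * (u * g u) + b * g u)).
  apply ip_add; apply ip_scal; auto. apply ip_mulx; auto. intros; ring. Qed.

Lemma nu_div q z i : 0 < q -> exists g, is_poly g /\ forall u, nu q u i = nu q z i + (u - z) * g u.
Proof.
  intros Hq. induction i.
  - exists (fun _ => 0). split. apply ip_const. intros; simpl; ring.
  - destruct IHi as [g [Hg E]]. set (c := / q ^ (2 * i + 1)).
    exists (fun u => nu q z i * c + g u * (c * u + -1)). split.
    apply ip_add. apply ip_const. apply ip_mullin; auto.
    intros u. rewrite !nu_S, E. unfold c, Rdiv. ring.
Qed.

Lemma inv_pow_split Q p p0 m : Q <> 0 ->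
  (/ Q ^ (p + p0)) ^ m = (/ Q ^ p0) ^ m * (/ Q ^ m) ^ p.
Proof.
  intros HQ. rewrite !pow_inv. rewrite <- Rinv_mult.
  f_equal. rewrite <- !pow_mult, <- pow_add. f_equal. nia.
Qed.

Lemma ell_zero q p0 g : 0 < q < 1 -> is_poly g -> forall r,
  ex_series (fun p => rho q p * (/ (q ^ 2) ^ (p + p0)) ^ S r * g (/ (q ^ 2) ^ (p + p0))) /\
  Series (fun p => rho q p * (/ (q ^ 2) ^ (p + p0)) ^ S r * g (/ (q ^ 2) ^ (p + p0))) = 0.
Proof.
  intros Hq Hg. pose proof (Q_facts q Hq) as HQ. set (Q := q ^ 2) in *.
  induction Hg as [c | g Hg IH | g h Hg IHg Hh IHh | c g Hg IH | g h Hg IH E]; intros r.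
  - assert (E : forall p, rho q p * (/ Q ^ (p + p0)) ^ S r * c =
        (c * (/ Q ^ p0) ^ S r) * (rho q p * (/ Q ^ S r) ^ p)).
    { intros p. rewrite inv_pow_split by lra. ring. }
    split. apply (ex_series_R_ext _ _ (fun p => eq_sym (E p))). apply ex_series_R_scal. apply rho_series; auto.
    rewrite (Series_ext _ _ E), Series_scal_l. fold (Rf q (/ Q ^ S r)). unfold Q. rewrite Rf_zero; auto. ring.
  - destruct (IH (S r)) as [A1 A2]. split.
    + apply (ex_series_R_ext _ _ (fun p => _) A1) || idtac.
      apply (ex_series_R_ext (fun p => rho q p * (/ Q ^ (p + p0)) ^ S (S r) * g (/ Q ^ (p + p0)))); auto.
      intros p. simpl. ring.
    + rewrite <- A2. apply Series_ext. intros p. simpl. ring.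
  - destruct (IHg r) as [A1 A2]. destruct (IHh r) as [B1 B2]. split.
    + apply (ex_series_R_ext (fun p => rho q p * (/ Q ^ (p + p0)) ^ S r * g (/ Q ^ (p + p0)) +
        rho q p * (/ Q ^ (p + p0)) ^ S r * h (/ Q ^ (p + p0)))). intros; ring.
      apply ex_series_R_plus; auto.
    + rewrite (Series_ext _ (fun p => rho q p * (/ Q ^ (p + p0)) ^ S r * g (/ Q ^ (p + p0)) +
        rho q p * (/ Q ^ (p + p0)) ^ S r * h (/ Q ^ (p + p0)))) by (intros; ring).
      rewrite Series_plus; auto. rewrite A2, B2; ring.
  - destruct (IH r) as [A1 A2]. split.
    + apply (ex_series_R_ext (fun p => c * (rho q p * (/ Q ^ (p + p0)) ^ S r * g (/ Q ^ (p + p0))))).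
      intros; ring. apply ex_series_R_scal; auto.
    + rewrite (Series_ext _ (fun p => c * (rho q p * (/ Q ^ (p + p0)) ^ S r * g (/ Q ^ (p + p0)))))
        by (intros; ring). rewrite Series_scal_l, A2; ring.
  - destruct (IH r) as [A1 A2]. split.
    + apply (ex_series_R_ext _ _ (fun p => f_equal _ (E _))); auto.
    + rewrite <- A2. apply Series_ext. intros; rewrite E; auto.
Qed.

Lemma Tp_ex q z p0 : 0 < q < 1 -> 0 < z < 1 ->
  ex_series (fun p => rho q p / (1 - z * (q ^ 2) ^ (p + p0))).
Proof.
  intros Hq Hz. pose proof (Q_facts q Hq) as HQ.
  apply (ex_series_R_le _ (fun p => / (1 - z) * Rabs (rho q p * 1 ^ p))).
  - intros p. rewrite pow1, Rmult_1_r. unfold Rdiv. rewrite Rabs_mult, Rmult_comm.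
    apply Rmult_le_compat_r. apply Rabs_pos.
    assert (0 <= (q ^ 2) ^ (p + p0) <= 1) by (split; [apply pow_le; lra| apply pow_le_one; lra]).
    assert (0 < 1 - z * (q ^ 2) ^ (p + p0)) by nra.
    rewrite Rabs_pos_eq by (apply Rlt_le, Rinv_0_lt_compat; lra).
    apply Rinv_le_contravar; nra.
  - apply ex_series_R_scal. apply rho_abs_series; auto.
Qed.

Lemma nu_ident q z p0 i : 0 < q < 1 -> 0 < z < 1 ->
  ex_series (fun p => rho q p / (1 - z * (q ^ 2) ^ (p + p0)) * nu q (/ (q ^ 2) ^ (p + p0)) i) /\
  Series (fun p => rho q p / (1 - z * (q ^ 2) ^ (p + p0)) * nu q (/ (q ^ 2) ^ (p + p0)) i)
  = nu q z i * Tp q z p0.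
Proof.
  intros Hq Hz. pose proof (Q_facts q Hq) as HQ. set (Q := q ^ 2) in *.
  destruct (nu_div q z i (proj1 Hq)) as [g [Hg Eg]].
  destruct (ell_zero q p0 g Hq Hg 0) as [A1 A2]. fold Q in A1, A2.
  assert (E : forall p, rho q p / (1 - z * Q ^ (p + p0)) * nu q (/ Q ^ (p + p0)) i =
     nu q z i * (rho q p / (1 - z * Q ^ (p + p0))) +
     rho q p * (/ Q ^ (p + p0)) ^ 1 * g (/ Q ^ (p + p0))).
  { intros p. rewrite Eg. assert (Hp : 0 < Q ^ (p + p0)) by (apply pow_lt; lra).
    assert (Hp1 : Q ^ (p + p0) <= 1) by (apply pow_le_one; lra).
    assert (Hd : 1 - z * Q ^ (p + p0) <> 0) by nra.
    rewrite pow_1. revert Hp Hd. generalize (Q ^ (p + p0)). intros P HP HdP. field. split; lra. }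
  split.
  - apply (ex_series_R_ext _ _ (fun p => eq_sym (E p))). apply ex_series_R_plus; auto.
    apply ex_series_R_scal. apply Tp_ex; auto.
  - rewrite (Series_ext _ _ E), Series_plus; auto. rewrite A2, Series_scal_l. unfold Tp. fold Q. ring.
    apply ex_series_R_scal. apply Tp_ex; auto.
Qed.

Lemma nu_bound q X i : 0 < q < 1 -> 1 <= X -> Rabs (nu q X i) <= X ^ i / q ^ (i * i).
Proof.
  intros Hq HX. induction i.
  - simpl. rewrite Rabs_R1. lra.
  - rewrite nu_S, Rabs_mult.
    assert (Hqi : 0 < q ^ (2 * i + 1)) by (apply pow_lt; lra).
    assert (H1 : 1 <= X / q ^ (2 * i + 1)).
    { apply Rmult_le_reg_r with (q ^ (2 * i + 1)); auto. unfold Rdiv.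
      rewrite Rmult_assoc, Rinv_l, Rmult_1_l, Rmult_1_r by lra.
      assert (q ^ (2 * i + 1) <= 1) by (apply pow_le_one; lra). lra. }
    rewrite (Rabs_pos_eq (X / q ^ (2 * i + 1) - 1)) by lra.
    apply Rle_trans with (X ^ i / q ^ (i * i) * (X / q ^ (2 * i + 1))).
    apply Rmult_le_compat; auto. apply Rabs_pos. lra. lra.
    right. replace (S i * S i)%nat with (i * i + (2 * i + 1))%nat by lia.
    rewrite (pow_add q (i * i)). change (X ^ S i) with (X * X ^ i). field. split; apply pow_nonzero; lra.
Qed.

Lemma sum_zero_below (f : nat -> R) N : (forall i, (i <= N)%nat -> f i = 0) -> @eq R (sum_n f N) 0.
Proof. induction N; intros H. rewrite sum_n_0; apply H; lia.
  rewrite sum_n_S. assert (E1 : sum_n f N = 0) by (apply IHN; intros; apply H; lia).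
  rewrite E1, (H (S N)) by lia. ring. Qed.

Lemma series_single (f : nat -> R) n : (forall i, i <> n -> f i = 0) -> Series f = f n.
Proof.
  intros H. apply is_series_unique.
  cut (is_lim_seq (sum_n f) (f n)). intros HH; exact HH.
  apply (is_lim_seq_ext_loc (fun _ => f n)).
  - exists n. intros N HN. cut (@eq R (f n) (sum_n f N)). intros HH; exact HH. induction N.
    + assert (n = 0%nat) by lia. subst. rewrite sum_n_0. auto.
    + rewrite sum_n_S. destruct (Nat.eq_dec (S N) n).
      * subst. rewrite sum_zero_below. ring. intros; apply H; lia.
      * rewrite <- IHN by lia. rewrite (H (S N)) by auto. ring.
  - apply is_lim_seq_const.
Qed.

Lemma pow_strict_decr q m n : 0 < q < 1 -> (m < n)%nat -> q ^ n < q ^ m.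
Proof. intros Hq Hmn. replace n with (m + (n - m))%nat by lia. rewrite pow_add.
  assert (0 < q ^ m) by (apply pow_lt; lra).
  assert (q ^ (n - m) < 1) by (apply pow_lt_1_compat; [lra|lia]). nra. Qed.

Lemma nu_zero_after q n j : 0 < q < 1 -> nu q (q ^ (2 * n + 1)) (S (n + j)) = 0.
Proof. intros Hq. induction j.
  - rewrite (Nat.add_0_r n), nu_S. unfold Rdiv. rewrite Rinv_r. ring. apply pow_nonzero; lra.
  - rewrite (Nat.add_succ_r n j), nu_S, IHj. ring. Qed.

Lemma nu_nonzero q n i : 0 < q < 1 -> (i <= n)%nat -> nu q (q ^ (2 * n + 1)) i <> 0.
Proof. intros Hq. induction i; intros Hi. simpl; lra.
  rewrite nu_S. apply Rmult_integral_contrapositive. split. apply IHi; lia.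
  assert (q ^ (2 * n + 1) < q ^ (2 * i + 1)) by (apply pow_strict_decr; auto; lia).
  assert (0 < q ^ (2 * i + 1)) by (apply pow_lt; lra).
  assert (q ^ (2 * n + 1) / q ^ (2 * i + 1) < 1).
  { apply Rmult_lt_reg_r with (q ^ (2 * i + 1)); auto. unfold Rdiv.
    rewrite Rmult_assoc, Rinv_l; lra. } lra. Qed.

Lemma pow_frac q E1 E2 E3 E4 : q <> 0 -> (E1 + E4 = E2 + E3)%nat -> q ^ E1 / q ^ E2 = q ^ E3 / q ^ E4.
Proof. intros Hq HE. assert (q ^ E1 * q ^ E4 = q ^ E3 * q ^ E2) by (rewrite <- !pow_add; f_equal; lia).
  assert (q ^ E2 <> 0) by (apply pow_nonzero; auto). assert (q ^ E4 <> 0) by (apply pow_nonzero; auto).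
  field_simplify_eq; auto. lra. Qed.

Lemma core_E q p0 (c : nat -> R) K : 0 < q < 1 ->
  (forall i, Rabs (c i) <= K * q ^ (2 * (i * i)) * q ^ (2 * (p0 * i))) ->
  (forall p, Series (fun i => c i * nu q (/ (q ^ 2) ^ (p + p0)) i) = 0) ->
  forall n, c n = 0.
Proof.
  intros Hq Hc Heq n. induction n as [n IH] using (well_founded_induction lt_wf).
  pose proof (Q_facts q Hq) as HQ. set (Q := q ^ 2) in *.
  set (z := q ^ (2 * n + 1)).
  assert (Hz : 0 < z < 1) by (split; [apply pow_lt; lra| apply pow_lt_1_compat; [lra|lia]]).
  set (X := fun p => / Q ^ (p + p0)).
  set (u := fun p i => rho q p / (1 - z * Q ^ (p + p0)) * (c i * nu q (X p) i)).
  destruct (rho_bound q Hq) as [k [Hk Hrho]].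
  set (b := 2 / (1 + q)).
  assert (Hb : 1 < b /\ b * q < 1) by (unfold b; split; [apply Rmult_lt_reg_r with (1 + q); [lra|]; unfold Rdiv; rewrite Rmult_assoc, Rinv_l; lra |
      apply Rmult_lt_reg_r with (1 + q); [lra|]; unfold Rdiv; replace (2 * / (1 + q) * q * (1 + q)) with (2 * q * ((1 + q) * / (1 + q))) by ring; rewrite Rinv_r; lra]).
  destruct (gauss_square q b Hq ltac:(lra)) as [M [HM HG]].
  assert (HK : 0 <= K).
  { specialize (Hc 0%nat). rewrite !Nat.mul_0_r in Hc. simpl in Hc. pose proof (Rabs_pos (c 0%nat)). lra. }
  set (C := K * M / (k * (1 - z))).
  assert (HC : 0 <= C).
  { unfold C. apply Rmult_le_pos. nra. apply Rlt_le, Rinv_0_lt_compat. nra. }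
  set (v := fun (p i : nat) => C * (b * q) ^ p * (/ b) ^ i).
  assert (Hdom : forall p i, Rabs (u p i) <= v p i).
  { intros p i. unfold u, v.
    assert (HQP : 0 < Q ^ (p + p0) <= 1) by (split; [apply pow_lt; lra| apply pow_le_one; lra]).
    assert (B2 : Rabs (/ (1 - z * Q ^ (p + p0))) <= / (1 - z)).
    { rewrite Rabs_pos_eq by (apply Rlt_le, Rinv_0_lt_compat; nra). apply Rinv_le_contravar; nra. }
    assert (HX : 1 <= X p).
    { unfold X. rewrite <- Rinv_1 at 1. apply Rinv_le_contravar; lra. }
    assert (B4 : Rabs (nu q (X p) i) <= / q ^ (2 * ((p + p0) * i)) / q ^ (i * i)).
    { eapply Rle_trans. apply nu_bound; auto. right. f_equal. unfold X, Q.
      rewrite pow_inv, <- !pow_mult. reflexivity. }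
    unfold Rdiv. rewrite Rabs_mult, Rabs_mult, Rabs_mult.
    assert (Hq1 : forall m, 0 < q ^ m) by (intros; apply pow_lt; lra).
    apply Rle_trans with ((q ^ (p * (p + 1)) / k) * / (1 - z) *
       ((K * q ^ (2 * (i * i)) * q ^ (2 * (p0 * i))) * (/ q ^ (2 * ((p + p0) * i)) / q ^ (i * i)))).
    { apply Rmult_le_compat. apply Rmult_le_pos; apply Rabs_pos. apply Rmult_le_pos; apply Rabs_pos.
      apply Rmult_le_compat; auto; apply Rabs_pos.
      apply Rmult_le_compat; auto; apply Rabs_pos. }
    assert (E : q ^ (p * (p + 1)) / k * / (1 - z) *
       (K * q ^ (2 * (i * i)) * q ^ (2 * (p0 * i)) * (/ q ^ (2 * ((p + p0) * i)) / q ^ (i * i)))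
       = K / (k * (1 - z)) * (q ^ (p * (p + 1) + 2 * (i * i) + 2 * (p0 * i)) / q ^ (2 * ((p + p0) * i) + i * i))).
    { rewrite !pow_add. field. repeat split; try apply pow_nonzero; lra. }
    assert (E2 : q ^ (p * (p + 1) + 2 * (i * i) + 2 * (p0 * i)) / q ^ (2 * ((p + p0) * i) + i * i)
       = q ^ (p + (p * p + i * i)) / q ^ (2 * p * i)) by (apply pow_frac; [lra|nia]).
    rewrite E, E2, (pow_add q p).
    replace (q ^ p * q ^ (p * p + i * i) / q ^ (2 * p * i)) with (q ^ p * (q ^ (p * p + i * i) / q ^ (2 * p * i)))
      by (unfold Rdiv; ring).
    specialize (HG i p).
    assert (HG' : q ^ (p * p + i * i) / q ^ (2 * p * i) <= M * b ^ p * (/ b) ^ i).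
    { rewrite pow_add. apply Rmult_le_reg_r with (q ^ (2 * p * i) * b ^ i).
      apply Rmult_lt_0_compat; auto; apply pow_lt; lra.
      replace (q ^ (p * p) * q ^ (i * i) / q ^ (2 * p * i) * (q ^ (2 * p * i) * b ^ i))
        with (b ^ i * q ^ (i * i) * q ^ (p * p)) by (field; apply pow_nonzero; lra).
      replace (M * b ^ p * (/ b) ^ i * (q ^ (2 * p * i) * b ^ i)) with (M * b ^ p * q ^ (2 * p * i)).
      exact HG. rewrite pow_inv. field. apply pow_nonzero; lra. }
    unfold C. rewrite Rpow_mult_distr.
    replace (K * M / (k * (1 - z)) * (b ^ p * q ^ p) * (/ b) ^ i)
      with (K / (k * (1 - z)) * (q ^ p * (M * b ^ p * (/ b) ^ i))) by (field; split; lra).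
    apply Rmult_le_compat_l. unfold Rdiv. apply Rmult_le_pos; auto. apply Rlt_le, Rinv_0_lt_compat; nra.
    apply Rmult_le_compat_l; auto. apply pow_le; lra. }
  assert (Hib : Rabs (/ b) < 1) by (rewrite Rabs_pos_eq; [rewrite <- Rinv_1; apply Rinv_lt_contravar; lra| apply Rlt_le, Rinv_0_lt_compat; lra]).
  assert (Hv1 : forall p, is_series (v p) (C * (b * q) ^ p * / (1 - / b))).
  { intros p. unfold v. apply (is_series_scal_l (C * (b * q) ^ p) (fun i => (/ b) ^ i)).
    apply is_series_geom; auto. }
  assert (Hv2 : ex_series (fun p => Series (v p))).
  { apply (ex_series_R_ext (fun p => (C * / (1 - / b)) * (b * q) ^ p)).
    intros p. rewrite (is_series_unique _ _ (Hv1 p)). ring.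
    apply ex_series_R_scal. apply ex_series_geom. rewrite Rabs_pos_eq. lra.
    apply Rmult_le_pos; lra. }
  destruct (fubini_dom u v Hdom (fun p => ex_intro _ _ (Hv1 p)) Hv2) as [F1 [F2 [F3 [F4 F5]]]].
  assert (Hrow : forall p, Series (u p) = 0).
  { intros p. unfold u. rewrite Series_scal_l. unfold X. fold Q in Heq. rewrite Heq. ring. }
  assert (Hcol : forall i, Series (fun p => u p i) = c i * (nu q z i * Tp q z p0)).
  { intros i. destruct (nu_ident q z p0 i Hq Hz) as [N1 N2]. fold Q in N1, N2.
    rewrite <- N2, <- Series_scal_l. apply Series_ext. intros p. unfold u, X. ring. }
  rewrite (Series_ext _ _ Hrow) in F5.
  rewrite (Series_ext _ _ Hcol) in F5.
  rewrite (Series_ext (fun _ => 0) (fun n => 0 * 1)), Series_scal_l in F5 by (intros; ring).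
  rewrite (series_single _ n) in F5.
  - pose proof (Tp_pos q z p0 Hq Hz). pose proof (nu_nonzero q n n Hq (le_n n)).
    fold z in H0. rewrite Rmult_0_l in F5. apply Rmult_integral in F5. destruct F5 as [F5|F5]; auto.
    exfalso. apply Rmult_integral in F5. destruct F5; [|lra]. contradiction.
  - intros i Hi. destruct (Nat.lt_gt_cases i n) as [H1 _]. destruct (H1 Hi) as [Hlt|Hgt].
    + rewrite (IH i Hlt). ring.
    + replace i with (S (n + (i - S n)))%nat by lia. unfold z. rewrite nu_zero_after; auto. ring.
Qed.

Definition ux (q g : R) (n : nat) : R := q ^ n * g.
Definition vx (q g : R) (n : nat) : R := / q ^ (S n) * g.
Definition TS (q g : R) (phi : R -> R) : R :=
  Series (fun n => phi (ux q g n)) + Series (fun n => phi (vx q g n)).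
Definition phim (q : R) (m : nat) (x : R) : R := x ^ (m + 1) * wf q x.
Definition Amom (q g : R) (m : nat) : R := TS q g (phim q m).

Lemma vside_bound q g a m : 0 < q < 1 -> 0 < g ->
  (g / q ^ a) ^ m * wf q (g / q ^ a) <= g ^ m * q ^ (a * (a + 1)) / (g ^ (2 * a) * q ^ (a * m)).
Proof.
  intros Hq Hg. pose proof (wf_upper q g a m Hq Hg).
  assert (0 < g ^ (2 * a)) by (apply pow_lt; lra). assert (0 < q ^ (a * m)) by (apply pow_lt; lra).
  apply Rmult_le_reg_r with (g ^ (2 * a) * q ^ (a * m)). nra.
  replace (g ^ m * q ^ (a * (a + 1)) / (g ^ (2 * a) * q ^ (a * m)) * (g ^ (2 * a) * q ^ (a * m)))
    with (g ^ m * q ^ (a * (a + 1))) by (field; lra).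
  rewrite <- Rmult_assoc. exact H.
Qed.

Lemma ux_pos q g n : 0 < q -> 0 < g -> 0 < ux q g n.
Proof. intros; unfold ux; apply Rmult_lt_0_compat; auto; apply pow_lt; auto. Qed.
Lemma vx_pos q g n : 0 < q -> 0 < g -> 0 < vx q g n.
Proof. intros; unfold vx; apply Rmult_lt_0_compat; auto; apply Rinv_0_lt_compat, pow_lt; auto. Qed.

Lemma vx_eq q g n : 0 < q -> vx q g n = g / q ^ (S n).
Proof. intros; unfold vx, Rdiv; ring. Qed.

Lemma phim_ux_ex q g m : 0 < q < 1 -> 0 < g -> ex_series (fun n => phim q m (ux q g n)).
Proof.
  intros Hq Hg. apply (ex_series_R_le _ (fun n => g ^ (m + 1) * (q ^ (m + 1)) ^ n)).
  - intros n. unfold phim, ux. rewrite Rabs_pos_eq.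
    rewrite Rpow_mult_distr, <- pow_mult, Nat.mul_comm, pow_mult.
    pose proof (wf_le1 q (q ^ n * g) Hq). pose proof (wf_pos q (q ^ n * g) Hq).
    assert (0 < (q ^ (m + 1)) ^ n * g ^ (m + 1)) by (apply Rmult_lt_0_compat; apply pow_lt; try apply pow_lt; lra).
    nra.
    apply Rmult_le_pos. apply pow_le. pose proof (ux_pos q g n). unfold ux in H; lra.
    left; apply wf_pos; auto.
  - apply ex_series_R_scal. apply ex_series_geom. rewrite Rabs_pos_eq.
    apply pow_lt_1_compat; [lra|lia]. apply pow_le; lra.
Qed.

Lemma phim_vx_ex q g m : 0 < q < 1 -> 0 < g -> ex_series (fun n => phim q m (vx q g n)).
Proof.
  intros Hq Hg. set (b := q / (g * g * q ^ (m + 1))).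
  assert (Hb : 0 < b) by (unfold b; apply Rdiv_lt_0_compat; [lra| apply Rmult_lt_0_compat; [nra| apply pow_lt; lra]]).
  apply (ex_series_R_le _ (fun n => g ^ (m + 1) * (b ^ (S n) * q ^ (S n * S n)))).
  - intros n. unfold phim. rewrite vx_eq by lra. set (a := S n).
    rewrite Rabs_pos_eq. eapply Rle_trans. apply vside_bound; auto.
    right. unfold b.
    replace (a * (a + 1))%nat with (a * a + a)%nat by lia.
    replace (2 * a)%nat with (a + a)%nat by lia.
    replace (a * (m + 1))%nat with ((m + 1) * a)%nat by lia.
    rewrite (pow_mult q (m + 1) a), (pow_add q (a * a) a), (pow_add g a a).
    unfold Rdiv. rewrite Rpow_mult_distr, pow_inv, !Rpow_mult_distr.
    field. assert (q ^ (m + 1) <> 0) by (apply pow_nonzero; lra). repeat split; try apply pow_nonzero; try lra; auto.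
    apply Rmult_le_pos. apply pow_le. apply Rlt_le, Rdiv_lt_0_compat; auto. apply pow_lt; lra.
    left; apply wf_pos; auto.
  - apply ex_series_R_scal. apply (ex_series_incr_1 (fun n => b ^ n * q ^ (n * n))).
    apply gauss_summable; auto.
Qed.

Lemma TS_shift q g phi : 0 < q < 1 -> 0 < g ->
  ex_series (fun n => phi (ux q g n)) -> ex_series (fun n => phi (vx q g n)) ->
  TS q g (fun x => phi (q * x)) = TS q g phi.
Proof.
  intros Hq Hg Hu Hv. unfold TS.
  assert (E1 : forall n, phi (q * ux q g n) = phi (ux q g (S n))).
  { intros; unfold ux; f_equal; simpl; ring. }
  assert (E2 : forall n, phi (q * vx q g (S n)) = phi (vx q g n)).
  { intros; unfold vx; f_equal. change (q ^ S (S n)) with (q * q ^ S n). field.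
    split. apply pow_nonzero; lra. lra. }
  assert (E3 : phi (q * vx q g 0) = phi (ux q g 0)).
  { unfold vx, ux. f_equal. simpl. field. lra. }
  rewrite (Series_ext _ _ E1).
  assert (Hv' : ex_series (fun n => phi (q * vx q g n))).
  { apply (ex_series_incr_1 (fun n => phi (q * vx q g n))).
    apply (ex_series_R_ext _ _ (fun n => eq_sym (E2 n))). auto. }
  rewrite (Series_incr_1 (fun n => phi (q * vx q g n))) by auto.
  rewrite (Series_ext _ _ E2), E3.
  rewrite (Series_incr_1 (fun n => phi (ux q g n))) by auto. ring.
Qed.

Lemma Amom_rec q g m : 0 < q < 1 -> 0 < g ->
  Amom q g (m + 2) = (/ q ^ (m + 1) - 1) * Amom q g m.
Proof.
  intros Hq Hg. unfold Amom.
  assert (Hsh : TS q g (fun x => phim q m (q * x)) = TS q g (phim q m)).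
  { apply TS_shift; auto. apply phim_ux_ex; auto. apply phim_vx_ex; auto. }
  assert (E : forall x, phim q m (q * x) = q ^ (m + 1) * (phim q m x + phim q (m + 2) x)).
  { intros x. unfold phim. rewrite wf_shift by auto. rewrite Rpow_mult_distr.
    replace (m + 2 + 1)%nat with ((m + 1) + 2)%nat by lia. rewrite (pow_add x (m + 1) 2). simpl. ring. }
  assert (HT : TS q g (fun x => phim q m (q * x)) =
     q ^ (m + 1) * (TS q g (phim q m) + TS q g (phim q (m + 2)))).
  { unfold TS. rewrite (Series_ext _ _ (fun n => E (ux q g n))), (Series_ext _ _ (fun n => E (vx q g n))).
    rewrite !Series_scal_l, !Series_plus; try apply phim_ux_ex; try apply phim_vx_ex; auto. ring. }
  rewrite Hsh in HT.
  assert (0 < q ^ (m + 1)) by (apply pow_lt; lra).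
  apply Rmult_eq_reg_l with (q ^ (m + 1)); [|lra].
  replace (q ^ (m + 1) * ((/ q ^ (m + 1) - 1) * TS q g (phim q m))) with
    (TS q g (phim q m) - q ^ (m + 1) * TS q g (phim q m)) by (field; lra).
  lra.
Qed.

Lemma Amom_even_pos q g p : 0 < q < 1 -> 0 < g -> 0 < Amom q g (2 * p).
Proof.
  intros Hq Hg. unfold Amom, TS.
  assert (Hp : forall x, 0 < x -> 0 < phim q (2 * p) x).
  { intros x Hx. unfold phim. apply Rmult_lt_0_compat. apply pow_lt; auto. apply wf_pos; auto. }
  assert (H1 : 0 < Series (fun n => phim q (2 * p) (ux q g n))).
  { eapply Rlt_le_trans; [|apply (term_le_series _ 0)]. apply Hp, ux_pos; lra.
    intros; left; apply Hp, ux_pos; lra. apply phim_ux_ex; auto. }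
  assert (H2 : 0 <= Series (fun n => phim q (2 * p) (vx q g n))).
  { eapply Rle_trans; [|apply (term_le_series _ 0)]. left; apply Hp, vx_pos; lra.
    intros; left; apply Hp, vx_pos; lra. apply phim_vx_ex; auto. }
  lra.
Qed.

Lemma Amom_nu q g p i : 0 < q < 1 -> 0 < g ->
  Amom q g (2 * (i + p)) = Amom q g (2 * p) * nu q (/ (q ^ 2) ^ p) i.
Proof.
  intros Hq Hg. induction i.
  - simpl. ring.
  - rewrite nu_S. replace (2 * (S i + p))%nat with (2 * (i + p) + 2)%nat by lia.
    rewrite Amom_rec by auto. rewrite IHi.
    replace (2 * (i + p) + 1)%nat with (2 * p + (2 * i + 1))%nat by lia.
    rewrite pow_add, <- pow_mult. unfold Rdiv. rewrite Rinv_mult. ring.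
Qed.

Definition fser (al : nat -> R) (x : R) : R := Series (fun l => al l * x ^ l).

Definition Jk (q : R) (al : nat -> R) (k : nat) (x : R) : R :=
  x * (fser al x * wf q x * x ^ k + fser al (- x) * wf q (- x) * (- x) ^ k).

Definition alpha_bd (r K : R) (al : nat -> R) : Prop := forall l, Rabs (al l) <= K * r ^ (l * l).

Lemma fser_ex r K al x : 0 < r < 1 -> alpha_bd r K al -> ex_series (fun l => al l * x ^ l).
Proof.
  intros Hr Ha. apply ex_series_Rabs.
  apply (ex_series_R_le _ (fun l => K * ((Rabs x + 1) ^ l * r ^ (l * l)))).
  - intros l. rewrite Rabs_Rabsolu, Rabs_mult, <- RPow_abs.
    specialize (Ha l).
    assert (Rabs x ^ l <= (Rabs x + 1) ^ l) by (apply pow_incr; split; [apply Rabs_pos|lra]).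
    assert (0 <= Rabs x ^ l) by (apply pow_le, Rabs_pos).
    assert (0 <= r ^ (l * l)) by (apply pow_le; lra).
    apply Rle_trans with (K * r ^ (l * l) * Rabs x ^ l).
    apply Rmult_le_compat_r; auto.
    replace (K * ((Rabs x + 1) ^ l * r ^ (l * l))) with (K * r ^ (l * l) * (Rabs x + 1) ^ l) by ring.
    apply Rmult_le_compat_l; auto. pose proof (Rabs_pos (al l)). nra.
  - apply ex_series_R_scal. apply gauss_summable; auto. pose proof (Rabs_pos x); lra.
Qed.

Lemma neg_pow x n : (- x) ^ n = (-1) ^ n * x ^ n.
Proof. rewrite <- Rpow_mult_distr. f_equal. ring. Qed.

Definition esgn (n : nat) : R := 1 + (-1) ^ n.

Lemma esgn_bd n : Rabs (esgn n) <= 2.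
Proof. unfold esgn. eapply Rle_trans. apply Rabs_triang.
  assert (Rabs (-1) = 1) by (unfold Rabs; destruct (Rcase_abs (-1)); lra).
  rewrite <- RPow_abs, Rabs_R1, H, pow1. lra. Qed.

Lemma Jk_series r K q al k x : 0 < r < 1 -> alpha_bd r K al ->
  Jk q al k x = Series (fun l => al l * (esgn (l + k) * phim q (l + k) x)).
Proof.
  intros Hr Ha. unfold Jk, fser. rewrite wf_even.
  assert (E : forall l, al l * (esgn (l + k) * phim q (l + k) x) =
    (x * wf q x * x ^ k) * (al l * x ^ l) + (x * wf q x * (-1) ^ k * x ^ k) * (al l * (- x) ^ l)).
  { intros l. unfold esgn, phim. rewrite neg_pow.
    rewrite (pow_add x (l + k) 1), (pow_add x l k), (pow_add (-1) l k). ring. }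
  rewrite (Series_ext _ _ E), Series_plus, !Series_scal_l.
  rewrite neg_pow. ring.
  apply ex_series_R_scal. apply (fser_ex r K); auto.
  apply ex_series_R_scal. apply (fser_ex r K); auto.
Qed.

Lemma udom r K q g al k n l : 0 < q < 1 -> 0 < g -> 0 <= K -> alpha_bd r K al ->
  Rabs (al l * (esgn (l + k) * phim q (l + k) (ux q g n))) <= (2 * K * g ^ (k + 1)) * q ^ n * (g ^ l * r ^ (l * l)).
Proof.
  intros Hq Hg HK Ha. rewrite !Rabs_mult.
  assert (Hph : 0 <= phim q (l + k) (ux q g n) <= q ^ n * (g ^ l * g ^ (k + 1))).
  { unfold phim, ux. pose proof (wf_pos q (q ^ n * g) Hq). pose proof (wf_le1 q (q ^ n * g) Hq).
    assert (H00 : 0 <= (q ^ n * g) ^ (l + k + 1)) by (apply pow_le; apply Rmult_le_pos; [apply pow_le|]; lra).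
    split. apply Rmult_le_pos; lra.
    apply Rle_trans with ((q ^ n * g) ^ (l + k + 1)). rewrite <- (Rmult_1_r ((q ^ n * g) ^ (l + k + 1))) at 2.
    apply Rmult_le_compat_l; lra.
    rewrite Rpow_mult_distr. rewrite <- Nat.add_assoc, (pow_add g l (k + 1)).
    apply Rmult_le_compat_r. apply Rmult_le_pos; apply pow_le; lra.
    replace (l + (k + 1))%nat with (S (l + k)) by lia. rewrite <- tech_pow_Rmult.
    rewrite <- (Rmult_1_r (q ^ n)) at 3. apply Rmult_le_compat_l. apply pow_le; lra.
    apply pow_le_one. split; [apply pow_le|apply pow_le_one]; lra. }
  rewrite (Rabs_pos_eq (phim _ _ _)) by lra.
  specialize (Ha l). pose proof (esgn_bd (l + k)).
  apply Rle_trans with (K * r ^ (l * l) * (2 * (q ^ n * (g ^ l * g ^ (k + 1))))).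
  apply Rmult_le_compat. apply Rabs_pos. apply Rmult_le_pos. apply Rabs_pos. lra. auto.
  apply Rmult_le_compat; try apply Rabs_pos; lra.
  right. ring.
Qed.

Lemma vdom r K g al k n l M : 0 < r < 1 -> 0 < g -> 0 <= K -> alpha_bd r K al ->
  (forall l a : nat, (2 * g) ^ l * r ^ (l * l) * r ^ (a * a) <= M * (2 * g) ^ a * r ^ (2 * a * l)) ->
  Rabs (al l * (esgn (l + k) * phim (r * r) (l + k) (vx (r * r) g n))) <=
  (2 * K * M * g ^ (k + 1)) * (/ 2) ^ l * (r ^ (S n * S n) * (2 / (g * r ^ (2 * k))) ^ (S n)).
Proof.
  intros Hr Hg HK Ha HG. set (q := r * r). assert (Hq : 0 < q < 1) by (unfold q; nra).
  set (a := S n). set (m := (l + k + 1)%nat).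
  rewrite !Rabs_mult.
  assert (Hph : 0 <= phim q (l + k) (vx q g n) <= g ^ m * q ^ (a * (a + 1)) / (g ^ (2 * a) * q ^ (a * m))).
  { unfold phim. rewrite vx_eq by lra. fold a. split.
    apply Rmult_le_pos. apply pow_le. apply Rlt_le, Rdiv_lt_0_compat; auto; apply pow_lt; lra.
    left; apply wf_pos; auto.
    apply vside_bound; auto. }
  rewrite (Rabs_pos_eq (phim _ _ _)) by lra.
  specialize (Ha l). pose proof (esgn_bd (l + k)).
  apply Rle_trans with (K * r ^ (l * l) * (2 * (g ^ m * q ^ (a * (a + 1)) / (g ^ (2 * a) * q ^ (a * m))))).
  apply Rmult_le_compat. apply Rabs_pos. apply Rmult_le_pos. apply Rabs_pos. lra. auto.
  apply Rmult_le_compat; try apply Rabs_pos; lra.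
  assert (Hr0 : r <> 0) by lra. assert (Hg0 : g <> 0) by lra.
  assert (e1 : q ^ (a * (a + 1)) = r ^ (a * a) * r ^ (a * a) * r ^ a * r ^ a).
  { unfold q. rewrite Rpow_mult_distr. replace (a * (a + 1))%nat with (a * a + a)%nat by lia.
    rewrite pow_add. ring. }
  assert (e2 : q ^ (a * m) = r ^ (a * l) * r ^ (a * l) * r ^ (a * k) * r ^ (a * k) * r ^ a * r ^ a).
  { unfold q, m. rewrite Rpow_mult_distr. replace (a * (l + k + 1))%nat with (a * l + a * k + a)%nat by lia.
    rewrite !pow_add. ring. }
  assert (e3 : g ^ m = g ^ l * g ^ k * g) by (unfold m; rewrite !pow_add; ring).
  assert (e4 : g ^ (2 * a) = g ^ a * g ^ a) by (replace (2 * a)%nat with (a + a)%nat by lia; apply pow_add).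
  assert (e5 : r ^ (2 * a * l) = r ^ (a * l) * r ^ (a * l)) by (rewrite <- pow_add; f_equal; lia).
  assert (e6 : (2 / (g * r ^ (2 * k))) ^ a = 2 ^ a / (g ^ a * (r ^ (a * k) * r ^ (a * k)))).
  { unfold Rdiv. rewrite Rpow_mult_distr, pow_inv, Rpow_mult_distr, <- pow_mult, <- pow_add.
    f_equal. f_equal. f_equal. f_equal. lia. }
  assert (e7 : g ^ (k + 1) = g ^ k * g) by (rewrite pow_add; ring).
  specialize (HG l a). rewrite !Rpow_mult_distr, e5 in HG.
  rewrite e1, e2, e3, e4, e6, e7, pow_inv.
  assert (P : forall j, 0 < r ^ j) by (intros; apply pow_lt; lra).
  assert (P' : forall j, 0 < g ^ j) by (intros; apply pow_lt; lra).
  assert (P2 : forall j, 0 < 2 ^ j) by (intros; apply pow_lt; lra).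
  set (F := K * 2 * g ^ k * g * r ^ (a * a) / (2 ^ l * g ^ a * g ^ a * r ^ (a * l) * r ^ (a * l) * r ^ (a * k) * r ^ (a * k))).
  assert (HF : 0 <= F).
  { unfold F. unfold Rdiv. apply Rmult_le_pos. repeat apply Rmult_le_pos; try lra; try (apply pow_le; lra).
    apply Rlt_le, Rinv_0_lt_compat. repeat apply Rmult_lt_0_compat; auto. }
  apply Rle_trans with ((2 ^ l * g ^ l * r ^ (l * l) * r ^ (a * a)) * F).
  { right. unfold F. field. repeat split; try apply pow_nonzero; lra. }
  apply Rle_trans with ((M * (2 ^ a * g ^ a) * (r ^ (a * l) * r ^ (a * l))) * F).
  { apply Rmult_le_compat_r; auto. }
  right. unfold F. field. repeat split; try apply pow_nonzero; lra.
Qed.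

Lemma TS_J r K g al k : 0 < r < 1 -> 0 < g -> 0 <= K -> alpha_bd r K al ->
  ex_series (fun l => al l * (esgn (l + k) * Amom (r * r) g (l + k))) /\
  TS (r * r) g (Jk (r * r) al k) = Series (fun l => al l * (esgn (l + k) * Amom (r * r) g (l + k))).
Proof.
  intros Hr Hg HK Ha. set (q := r * r). assert (Hq : 0 < q < 1) by (unfold q; nra).
  set (U := fun n l => al l * (esgn (l + k) * phim q (l + k) (ux q g n))).
  set (V := fun n l => al l * (esgn (l + k) * phim q (l + k) (vx q g n))).
  set (VU := fun (n l : nat) => (2 * K * g ^ (k + 1)) * q ^ n * (g ^ l * r ^ (l * l))).
  assert (HVU1 : forall n, ex_series (VU n)).
  { intros n. unfold VU. apply ex_series_R_scal. apply gauss_summable; auto. }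
  assert (HVU2 : ex_series (fun n => Series (VU n))).
  { apply (ex_series_R_ext (fun n => ((2 * K * g ^ (k + 1)) * Series (fun l => g ^ l * r ^ (l * l))) * q ^ n)).
    intros n. unfold VU. rewrite Series_scal_l. ring.
    apply ex_series_R_scal. apply ex_series_geom. rewrite Rabs_pos_eq; lra. }
  destruct (fubini_dom U VU (fun n l => udom r K q g al k n l Hq Hg HK Ha) HVU1 HVU2) as [U1 [U2 [U3 [U4 U5]]]].
  destruct (gauss_square r (2 * g) Hr ltac:(lra)) as [M [HM HG]].
  set (c := 2 / (g * r ^ (2 * k))).
  assert (Hc : 0 < c) by (unfold c; apply Rdiv_lt_0_compat; [lra| apply Rmult_lt_0_compat; [lra| apply pow_lt; lra]]).
  set (VV := fun (n l : nat) => (2 * K * M * g ^ (k + 1)) * (/ 2) ^ l * (r ^ (S n * S n) * c ^ (S n))).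
  assert (Hg2 : is_series (fun l => (/ 2) ^ l) (/ (1 - / 2))) by (apply is_series_geom; rewrite Rabs_pos_eq; lra).
  assert (HVV1 : forall n, ex_series (VV n)).
  { intros n. unfold VV. apply (ex_series_R_ext (fun l => (2 * K * M * g ^ (k + 1) * (r ^ (S n * S n) * c ^ (S n))) * (/ 2) ^ l)).
    intros; ring. apply ex_series_R_scal. eexists; exact Hg2. }
  assert (HVV2 : ex_series (fun n => Series (VV n))).
  { apply (ex_series_R_ext (fun n => (2 * K * M * g ^ (k + 1) * / (1 - / 2)) * (c ^ (S n) * r ^ (S n * S n)))).
    intros n. unfold VV. rewrite (Series_ext _ (fun l => (2 * K * M * g ^ (k + 1) * (r ^ (S n * S n) * c ^ (S n))) * (/ 2) ^ l))
      by (intros; ring).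
    rewrite Series_scal_l. rewrite (is_series_unique (pow (/ 2)) _ Hg2). ring.
    apply ex_series_R_scal. apply (ex_series_incr_1 (fun n => c ^ n * r ^ (n * n))). apply gauss_summable; auto. }
  destruct (fubini_dom V VV (fun n l => vdom r K g al k n l M Hr Hg HK Ha HG) HVV1 HVV2) as [V1 [V2 [V3 [V4 V5]]]].
  assert (Eq : forall l, Series (fun n => U n l) + Series (fun n => V n l) = al l * (esgn (l + k) * Amom q g (l + k))).
  { intros l. unfold U, V, Amom, TS.
    rewrite (Series_ext _ (fun n => (al l * esgn (l + k)) * phim q (l + k) (ux q g n))) by (intros; ring).
    rewrite (Series_ext (fun n => al l * (esgn (l + k) * phim q (l + k) (vx q g n)))
      (fun n => (al l * esgn (l + k)) * phim q (l + k) (vx q g n))) by (intros; ring).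
    rewrite !Series_scal_l. ring. }
  split. apply (ex_series_R_ext _ _ Eq). apply ex_series_R_plus; auto.
  unfold TS at 1.
  rewrite (Series_ext (fun n => Jk q al k (ux q g n)) (fun n => Series (U n))) by (intros; apply (Jk_series r K); auto).
  rewrite (Series_ext (fun n => Jk q al k (vx q g n)) (fun n => Series (V n))) by (intros; apply (Jk_series r K); auto).
  rewrite <- U5, <- V5. rewrite <- Series_plus by auto.
  apply Series_ext. exact Eq.
Qed.

Lemma sum_n_even (u : nat -> R) N : (forall i, u (2 * i + 1)%nat = 0) ->
  @eq R (sum_n u (2 * N + 1)) (sum_n (fun i => u (2 * i)%nat) N).
Proof. intros H. induction N.
  - pose proof (H 0%nat) as H0. simpl in H0. change (2 * 0 + 1)%nat with 1%nat.
    rewrite sum_n_S, sum_n_0, sum_n_0, H0. simpl. ring.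
  - replace (2 * S N + 1)%nat with (S (S (2 * N + 1))) by lia.
    rewrite !sum_n_S, IHN. replace (S (S (2 * N + 1))) with (2 * S N + 1)%nat by lia.
    rewrite H. replace (S (2 * N + 1)) with (2 * S N)%nat by lia. ring.
Qed.

Lemma sum_n_odd (u : nat -> R) N : (forall i, u (2 * i)%nat = 0) ->
  @eq R (sum_n u (2 * N + 1)) (sum_n (fun i => u (2 * i + 1)%nat) N).
Proof. intros H. induction N.
  - pose proof (H 0%nat) as H0. simpl in H0. change (2 * 0 + 1)%nat with 1%nat.
    rewrite sum_n_S, sum_n_0, sum_n_0, H0. simpl. ring.
  - replace (2 * S N + 1)%nat with (S (S (2 * N + 1))) by lia.
    rewrite !sum_n_S, IHN. replace (S (2 * N + 1)) with (2 * S N)%nat by lia.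
    rewrite H. replace (S (2 * S N)) with (2 * S N + 1)%nat by lia. ring.
Qed.

Lemma subseq_lim (u : nat -> R) S : is_series u S -> is_lim_seq (fun N => sum_n u (2 * N + 1)) S.
Proof. intros H. apply (is_lim_seq_subseq (sum_n u) S (fun N => (2 * N + 1)%nat)).
  apply eventually_subseq. intros; lia. exact H. Qed.

Lemma even_series (u : nat -> R) : ex_series u -> (forall i, u (2 * i + 1)%nat = 0) ->
  Series (fun i => u (2 * i)%nat) = Series u.
Proof. intros [S HS] H. rewrite (is_series_unique _ _ HS). apply is_series_unique.
  cut (is_lim_seq (sum_n (fun i => u (2 * i)%nat)) S). intros HH; exact HH.
  apply (is_lim_seq_ext _ _ _ (fun N => sum_n_even u N H)). apply subseq_lim; auto. Qed.

Lemma odd_series (u : nat -> R) : ex_series u -> (forall i, u (2 * i)%nat = 0) ->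
  Series (fun i => u (2 * i + 1)%nat) = Series u.
Proof. intros [S HS] H. rewrite (is_series_unique _ _ HS). apply is_series_unique.
  cut (is_lim_seq (sum_n (fun i => u (2 * i + 1)%nat)) S). intros HH; exact HH.
  apply (is_lim_seq_ext _ _ _ (fun N => sum_n_odd u N H)). apply subseq_lim; auto. Qed.

Lemma esgn_even n : esgn (2 * n) = 2.
Proof. unfold esgn. rewrite pow_1_even. ring. Qed.
Lemma esgn_odd n : esgn (2 * n + 1) = 0.
Proof. unfold esgn. replace (2 * n + 1)%nat with (S (2 * n)) by lia. rewrite pow_1_odd. ring. Qed.

Lemma rr_pow r n : (r * r) ^ n = r ^ (2 * n).
Proof. rewrite Rpow_mult_distr, <- pow_add. f_equal. lia. Qed.

Lemma real_core r K g al : 0 < r < 1 -> 0 < g -> 0 <= K -> alpha_bd r K al ->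
  (forall k, TS (r * r) g (Jk (r * r) al k) = 0) -> forall l, al l = 0.
Proof.
  intros Hr Hg HK Ha Hk.
  assert (Hq : 0 < r * r < 1) by nra.
  assert (HJ : forall k, ex_series (fun l => al l * (esgn (l + k) * Amom (r * r) g (l + k))) /\
                         Series (fun l => al l * (esgn (l + k) * Amom (r * r) g (l + k))) = 0).
  { intros k. destruct (TS_J r K g al k Hr Hg HK Ha) as [T1 T2]. split; auto. rewrite <- T2. auto. }
  assert (Hev : forall i, al (2 * i)%nat = 0).
  { apply (core_E (r * r) 0 (fun i => al (2 * i)%nat) K Hq).
    - intros i. rewrite Nat.mul_0_l, Nat.mul_0_r, pow_O, Rmult_1_r, rr_pow.
      eapply Rle_trans. apply Ha. right. f_equal. f_equal. lia.
    - intros p. destruct (HJ (2 * p)%nat) as [J1 J2].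
      rewrite <- (even_series _ J1) in J2.
      2: { intros i. replace (2 * i + 1 + 2 * p)%nat with (2 * (i + p) + 1)%nat by lia.
           rewrite esgn_odd. ring. }
      rewrite (Series_ext _ (fun i => (2 * Amom (r * r) g (2 * p)) * (al (2 * i)%nat * nu (r * r) (/ ((r * r) ^ 2) ^ (p + 0)) i))) in J2.
      2: { intros i. replace (2 * i + 2 * p)%nat with (2 * (i + p))%nat by lia.
           rewrite esgn_even, Amom_nu by auto. rewrite Nat.add_0_r. ring. }
      rewrite Series_scal_l in J2. pose proof (Amom_even_pos (r * r) g p Hq Hg).
      apply Rmult_integral in J2. destruct J2; auto. lra. }
  assert (Hod : forall i, al (2 * i + 1)%nat = 0).
  { apply (core_E (r * r) 1 (fun i => al (2 * i + 1)%nat) K Hq).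
    - intros i. rewrite !rr_pow.
      eapply Rle_trans. apply Ha. rewrite Rmult_assoc, <- pow_add. apply Rmult_le_compat_l; auto.
      apply pow_decr_exp. lra. lia.
    - intros p. destruct (HJ (2 * p + 1)%nat) as [J1 J2].
      rewrite <- (odd_series _ J1) in J2.
      2: { intros i. replace (2 * i + (2 * p + 1))%nat with (2 * (i + p) + 1)%nat by lia.
           rewrite esgn_odd. ring. }
      rewrite (Series_ext _ (fun i => (2 * Amom (r * r) g (2 * (p + 1))) * (al (2 * i + 1)%nat * nu (r * r) (/ ((r * r) ^ 2) ^ (p + 1)) i))) in J2.
      2: { intros i. replace (2 * i + 1 + (2 * p + 1))%nat with (2 * (i + (p + 1)))%nat by lia.
           rewrite esgn_even, Amom_nu by auto. ring. }
      rewrite Series_scal_l in J2. pose proof (Amom_even_pos (r * r) g (p + 1) Hq Hg).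
      apply Rmult_integral in J2. destruct J2; auto. lra. }
  intros l. destruct (Nat.Even_or_Odd l) as [[i Hi]|[i Hi]]; subst l.
  apply Hev. apply Hod.
Qed.

Lemma C_eq (a b : C) : fst a = fst b -> snd a = snd b -> a = b.
Proof. destruct a, b; simpl; intros; subst; auto. Qed.

Lemma cpow_real x n : cpow (RtoC x) n = RtoC (x ^ n).
Proof. induction n. reflexivity. simpl. rewrite IHn. apply C_eq; simpl; ring. Qed.

Lemma qpoch_real q x n : qpoch_n (Copp (Cmult (RtoC x) (RtoC x))) (q ^ 2) n = RtoC (Pw q x n).
Proof. induction n. reflexivity. cbn [qpoch_n]. rewrite IHn. rewrite Pw_S.
  apply C_eq; simpl; ring. Qed.

Lemma eq_real q x : 0 < q < 1 -> e_q (q ^ 2) (Copp (Cmult (RtoC x) (RtoC x))) = RtoC (wf q x).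
Proof.
  intros Hq. unfold e_q, qpoch_inf.
  rewrite (Lim_seq_ext (fun n => Im (qpoch_n (Copp (Cmult (RtoC x) (RtoC x))) (q ^ 2) n)) (fun _ => 0))
    by (intros; cbv beta; rewrite qpoch_real; reflexivity).
  rewrite (Lim_seq_ext _ (Pw q x)) by (intros; cbv beta; rewrite qpoch_real; reflexivity).
  rewrite Lim_seq_const. fold (Wf q x). simpl real. pose proof (W_ge1 q x Hq).
  unfold Cinv, wf. apply C_eq; simpl; field; lra.
Qed.

Definition reP (a : nat -> C) (l : nat) : R := fst (a l).
Definition imP (a : nat -> C) (l : nat) : R := snd (a l).

Lemma powser_real a x : powser a (RtoC x) = (fser (reP a) x, fser (imP a) x).
Proof.
  unfold powser, CSeries, fser. apply C_eq; simpl; apply Series_ext; intros l;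
  rewrite cpow_real; unfold reP, imP; destruct (a l); simpl; ring.
Qed.

Lemma MF_real q a x : 0 < q < 1 ->
  MF q a (RtoC x) = (fser (reP a) x * wf q x, fser (imP a) x * wf q x).
Proof. intros Hq. unfold MF. rewrite powser_real, eq_real by auto. apply C_eq; simpl; ring. Qed.

Lemma powerRZ_pos_nat q n : powerRZ q (Z.of_nat n) = q ^ n.
Proof. rewrite <- pow_powerRZ. auto. Qed.

Lemma powerRZ_neg_nat q n : powerRZ q (- Z.of_nat (S n)) = / q ^ (S n).
Proof. simpl. rewrite SuccNat2Pos.id_succ. reflexivity. Qed.

Lemma jterm_re q g0 a k n : 0 < q < 1 ->
  let g := fun x : R => Cmult (MF q a (RtoC x)) (RtoC (x ^ k)) in
  fst (jterm q g0 g (Z.of_nat n)) = Jk q (reP a) k (ux q g0 n) /\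
  snd (jterm q g0 g (Z.of_nat n)) = Jk q (imP a) k (ux q g0 n) /\
  fst (jterm q g0 g (- Z.of_nat (S n))) = Jk q (reP a) k (vx q g0 n) /\
  snd (jterm q g0 g (- Z.of_nat (S n))) = Jk q (imP a) k (vx q g0 n).
Proof.
  intros Hq g. unfold jterm, g. rewrite powerRZ_pos_nat, powerRZ_neg_nat.
  unfold ux, vx, Jk. rewrite !MF_real by auto.
  repeat split; simpl; ring.
Qed.

Lemma CSeries_fst u : fst (CSeries u) = Series (fun n => fst (u n)).
Proof. reflexivity. Qed.
Lemma CSeries_snd u : snd (CSeries u) = Series (fun n => snd (u n)).
Proof. reflexivity. Qed.

Lemma jackson_fst q g0 g : fst (jackson q g0 g) =
  (1 - q) * (Series (fun n => fst (jterm q g0 g (Z.of_nat n))) + Series (fun n => fst (jterm q g0 g (- Z.of_nat (S n))))).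
Proof. unfold jackson, CSeries. simpl. ring. Qed.
Lemma jackson_snd q g0 g : snd (jackson q g0 g) =
  (1 - q) * (Series (fun n => snd (jterm q g0 g (Z.of_nat n))) + Series (fun n => snd (jterm q g0 g (- Z.of_nat (S n))))).
Proof. unfold jackson, CSeries. simpl. ring. Qed.

Lemma TS_from_jackson q g0 a k : 0 < q < 1 ->
  let g := fun x : R => Cmult (MF q a (RtoC x)) (RtoC (x ^ k)) in
  jackson q g0 g = RtoC 0 ->
  TS q g0 (Jk q (reP a) k) = 0 /\ TS q g0 (Jk q (imP a) k) = 0.
Proof.
  intros Hq g H.
  assert (H1 := jackson_fst q g0 g). assert (H2 := jackson_snd q g0 g).
  rewrite H in H1, H2. unfold RtoC in H1, H2. cbn [fst snd] in H1, H2.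
  unfold TS.
  rewrite (Series_ext (fun n => fst (jterm q g0 g (Z.of_nat n))) (fun n => Jk q (reP a) k (ux q g0 n))) in H1
    by (intros; apply (jterm_re q g0 a k n Hq)).
  rewrite (Series_ext (fun n => fst (jterm q g0 g (- Z.of_nat (S n)))) (fun n => Jk q (reP a) k (vx q g0 n))) in H1
    by (intros; apply (jterm_re q g0 a k n Hq)).
  rewrite (Series_ext (fun n => snd (jterm q g0 g (Z.of_nat n))) (fun n => Jk q (imP a) k (ux q g0 n))) in H2
    by (intros; apply (jterm_re q g0 a k n Hq)).
  rewrite (Series_ext (fun n => snd (jterm q g0 g (- Z.of_nat (S n)))) (fun n => Jk q (imP a) k (vx q g0 n))) in H2
    by (intros; apply (jterm_re q g0 a k n Hq)).
  split.
  - apply Rmult_eq_reg_l with (1 - q). rewrite Rmult_0_r. lra. lra.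
  - apply Rmult_eq_reg_l with (1 - q). rewrite Rmult_0_r. lra. lra.
Qed.

Lemma Series_zero : Series (fun _ : nat => 0) = 0.
Proof. rewrite (Series_ext _ (fun n => 0 * 1)) by (intros; ring). rewrite Series_scal_l. ring. Qed.

Lemma im_le_Cmod (c : C) : Rabs (snd c) <= Cmod c.
Proof. unfold Cmod. rewrite <- sqrt_Rsqr_abs. apply sqrt_le_1_alt. unfold Rsqr. simpl.
  pose proof (sq_nn (fst c)). lra. Qed.

Theorem lemma5p10 (q s gamma Cst : R) (a : nat -> C) :
  0 < q < 1 -> 0 < s < 1 -> 0 < gamma -> 0 < Cst ->
  Ms_coeff_bound q s Cst a ->
  (forall k : nat,
      let g := fun x : R => Cmult (MF q a (RtoC x)) (RtoC (x ^ k)) in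
      jackson_abs_conv q gamma g /\ jackson q gamma g = RtoC 0) ->
  forall z : C, Rabs (Im z) < 1 -> MF q a z = RtoC 0.
Proof.
  intros Hq Hs Hg HC Hb Hj z Hz.
  set (r := Rpower q (1 / 2)).
  assert (Hr0 : 0 < r) by (unfold r, Rpower; apply exp_pos).
  assert (Hrr : r * r = q).
  { unfold r. rewrite <- Rpower_plus. replace (1 / 2 + 1 / 2) with 1 by field. apply Rpower_1; lra. }
  assert (Hr : 0 < r < 1) by nra.
  assert (Hpow : forall l, Rpower q (INR (l * l) / 2) = r ^ (l * l)).
  { intros l. rewrite <- (Rpower_pow (l * l) r Hr0). unfold r. rewrite Rpower_mult. f_equal. field. }
  assert (Hcoef : forall l, Cmod (a l) <= Cst * r ^ (l * l)).
  { intros l. eapply Rle_trans. apply Hb. rewrite Hpow.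
    assert (s ^ l <= 1) by (apply pow_le_one; lra).
    assert (0 <= s ^ l) by (apply pow_le; lra).
    assert (0 <= r ^ (l * l)) by (apply pow_le; lra).
    rewrite <- (Rmult_1_r Cst) at 2. apply Rmult_le_compat_r; auto. apply Rmult_le_compat_l; lra. }
  assert (Hre : alpha_bd r Cst (reP a)).
  { intros l. eapply Rle_trans; [|apply Hcoef]. apply re_le_Cmod. }
  assert (Him : alpha_bd r Cst (imP a)).
  { intros l. eapply Rle_trans; [|apply Hcoef]. apply im_le_Cmod. }
  assert (HTS : forall k, TS (r * r) gamma (Jk (r * r) (reP a) k) = 0 /\ TS (r * r) gamma (Jk (r * r) (imP a) k) = 0).
  { intros k. rewrite Hrr. destruct (Hj k) as [_ Hjk]. apply (TS_from_jackson q gamma a k Hq). exact Hjk. }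
  assert (Hre0 := real_core r Cst gamma (reP a) Hr Hg (Rlt_le _ _ HC) Hre (fun k => proj1 (HTS k))).
  assert (Him0 := real_core r Cst gamma (imP a) Hr Hg (Rlt_le _ _ HC) Him (fun k => proj2 (HTS k))).
  assert (Ha0 : forall l, a l = RtoC 0).
  { intros l. apply C_eq; simpl. apply Hre0. apply Him0. }
  unfold MF, powser, CSeries.
  rewrite (Series_ext _ (fun _ => 0)) by (intros l; rewrite Ha0; simpl; ring).
  rewrite (Series_ext (fun n => Im (Cmult (a n) (cpow z n))) (fun _ => 0)) by (intros l; rewrite Ha0; simpl; ring).
  rewrite Series_zero. apply C_eq; simpl; ring.
Qed.
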